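(* Let $c:I\to\mathbb{L}^3$ ($I\subset\mathbb{R}$ an open interval) be a regular real analytic curve which is spacelike or timelike, and let $n:I\to\mathbb{L}^3$ be a real analytic spacelike unit normal vector field along $c$ (i.e. $\langle n,n\rangle=1$ and $\langle n(t),c'(t)\rangle=0$). Then there exists a Born-Infeld soliton general surface which solves the Björling problem for $(c,n)$, i.e. a Born-Infeld soliton general surface $X:\Omega\to\mathbb{L}^3$, with $\Omega\subset\mathbb{R}^2$ open containing $I\times\{0\}$, such that $X(t,0)=c(t)$ and the unit normal of $X$ satisfies $N(t,0)=n(t)$ for all $t\in I$.
   Context: $\mathbb{L}^3$ denotes $\mathbb{R}^3$ with the metric $\langle\cdot,\cdot\rangle$ given by $ds^2=dx^2+dy^2-dz^2$. A function $\psi$ on an open set of the $(u,v)$-plane is a Born-Infeld soliton (in the variables $u,v$) if $(1-\psi_v^2)\psi_{uu}+2\psi_u\psi_v\psi_{uv}-(1+\psi_u^2)\psi_{vv}=0$. A surface is a Born-Infeld soliton general surface if it is locally of the form $(\psi(y,z),y,z)$, $(x,\psi(x,z),z)$ or $(x,y,\psi(x,y))$ where $\psi$ solves the Born-Infeld equation (in the respective pair of variables). *)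

(* Defs.v *)
From Stdlib Require Import Reals.
From Coquelicot Require Import Coquelicot.
Open Scope R_scope.

Definition V3 : Type := (R * R * R)%type.
Definition vx (p : V3) : R := fst (fst p).
Definition vy (p : V3) : R := snd (fst p).
Definition vz (p : V3) : R := snd p.
Definition mk3 (a b c : R) : V3 := (a, b, c).

Definition lprod (p q : V3) : R := vx p * vx q + vy p * vy q - vz p * vz q.

Definition in_interval (a b : Rbar) (t : R) : Prop := Rbar_lt a t /\ Rbar_lt t b.

Definition analytic_at (f : R -> R) (t0 : R) : Prop :=
  exists r : R, 0 < r /\ exists coef : nat -> R,
    forall t, Rabs (t - t0) < r -> is_pseries coef (t - t0) (f t).

Definition analytic_on (I : R -> Prop) (f : R -> R) : Prop :=
  forall t, I t -> analytic_at f t.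

Definition analytic_curve (I : R -> Prop) (c : R -> V3) : Prop :=
  analytic_on I (fun t => vx (c t)) /\ analytic_on I (fun t => vy (c t)) /\
  analytic_on I (fun t => vz (c t)).

Definition dcurve (c : R -> V3) (t : R) : V3 :=
  mk3 (Derive (fun s => vx (c s)) t) (Derive (fun s => vy (c s)) t)
      (Derive (fun s => vz (c s)) t).

Definition open2 (O : R -> R -> Prop) : Prop :=
  forall u v, O u v -> exists e : R, 0 < e /\
    forall u' v', Rabs (u' - u) < e -> Rabs (v' - v) < e -> O u' v'.

Definition pu (f : R -> R -> R) (u v : R) : R := Derive (fun s => f s v) u.
Definition pv (f : R -> R -> R) (u v : R) : R := Derive (fun s => f u s) v.

Definition C1_on (O : R -> R -> Prop) (f : R -> R -> R) : Prop :=
  forall u v, O u v ->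
    ex_derive (fun s => f s v) u /\ ex_derive (fun s => f u s) v /\
    continuous (fun p : R * R => pu f (fst p) (snd p)) (u, v) /\
    continuous (fun p : R * R => pv f (fst p) (snd p)) (u, v).

Definition C2_on (O : R -> R -> Prop) (f : R -> R -> R) : Prop :=
  C1_on O f /\ C1_on O (pu f) /\ C1_on O (pv f).

Definition BI_soliton (D : R -> R -> Prop) (psi : R -> R -> R) : Prop :=
  open2 D /\ C2_on D psi /\
  forall u v, D u v ->
    (1 - (pv psi u v) ^ 2) * pu (pu psi) u v
    + 2 * pu psi u v * pv psi u v * pv (pu psi) u v
    - (1 + (pu psi u v) ^ 2) * pv (pv psi) u v = 0.

Definition Xu (X : R -> R -> V3) (u v : R) : V3 :=
  mk3 (pu (fun a b => vx (X a b)) u v) (pu (fun a b => vy (X a b)) u v)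
      (pu (fun a b => vz (X a b)) u v).
Definition Xv (X : R -> R -> V3) (u v : R) : V3 :=
  mk3 (pv (fun a b => vx (X a b)) u v) (pv (fun a b => vy (X a b)) u v)
      (pv (fun a b => vz (X a b)) u v).

Definition regular_surface (O : R -> R -> Prop) (X : R -> R -> V3) : Prop :=
  open2 O /\
  C1_on O (fun a b => vx (X a b)) /\ C1_on O (fun a b => vy (X a b)) /\
  C1_on O (fun a b => vz (X a b)) /\
  forall u v, O u v -> forall al be : R,
    al * vx (Xu X u v) + be * vx (Xv X u v) = 0 ->
    al * vy (Xu X u v) + be * vy (Xv X u v) = 0 ->
    al * vz (Xu X u v) + be * vz (Xv X u v) = 0 ->
    al = 0 /\ be = 0.

Definition unit_normal_at (X : R -> R -> V3) (u v : R) (N : V3) : Prop :=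
  lprod N N = 1 /\ lprod N (Xu X u v) = 0 /\ lprod N (Xv X u v) = 0.

Definition on_graph_x (D : R -> R -> Prop) (psi : R -> R -> R) (p : V3) : Prop :=
  D (vy p) (vz p) /\ vx p = psi (vy p) (vz p).
Definition on_graph_y (D : R -> R -> Prop) (psi : R -> R -> R) (p : V3) : Prop :=
  D (vx p) (vz p) /\ vy p = psi (vx p) (vz p).
Definition on_graph_z (D : R -> R -> Prop) (psi : R -> R -> R) (p : V3) : Prop :=
  D (vx p) (vy p) /\ vz p = psi (vx p) (vy p).

Definition BI_general_surface (O : R -> R -> Prop) (X : R -> R -> V3) : Prop :=
  regular_surface O X /\
  forall u v, O u v -> exists e : R, 0 < e /\
    exists (D : R -> R -> Prop) (psi : R -> R -> R), BI_soliton D psi /\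
      let nbhd := fun u' v' => O u' v' /\ Rabs (u' - u) < e /\ Rabs (v' - v) < e in
      ((forall u' v', nbhd u' v' -> on_graph_x D psi (X u' v')) \/
       (forall u' v', nbhd u' v' -> on_graph_y D psi (X u' v')) \/
       (forall u' v', nbhd u' v' -> on_graph_z D psi (X u' v'))).

(* Main.v *)
Require Import Defs.
From Stdlib Require Import Reals Lra Psatz Nsatz ClassicalEpsilon Arith Lia.
From Coquelicot Require Import Coquelicot.
Open Scope R_scope.

Lemma ballR (x y : R) (d : R) : ball x d y <-> Rabs (y - x) < d.
Proof. reflexivity. Qed.

Lemma cont_eps (f : R -> R) x : continuous f x ->
  forall e, 0 < e -> exists d, 0 < d /\ forall y, Rabs (y - x) < d -> Rabs (f y - f x) < e.
Proof.
  intros Hc e He.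
  destruct (proj1 (filterlim_locally f (f x)) Hc (mkposreal e He)) as [d Hd].
  exists d; split; [apply cond_pos|]. intros y Hy. apply (Hd y). exact Hy.
Qed.

Lemma cont2_eps (f : R * R -> R) x1 x2 : continuous f (x1, x2) ->
  forall e, 0 < e -> exists d, 0 < d /\ forall y1 y2, Rabs (y1 - x1) < d -> Rabs (y2 - x2) < d ->
    Rabs (f (y1, y2) - f (x1, x2)) < e.
Proof.
  intros Hc e He.
  destruct (proj1 (filterlim_locally f (f (x1,x2))) Hc (mkposreal e He)) as [d Hd].
  exists d; split; [apply cond_pos|]. intros y1 y2 H1 H2. apply (Hd (y1,y2)). split; assumption.
Qed.

Lemma eps_cont2 (f : R * R -> R) x1 x2 :
  (forall e, 0 < e -> exists d, 0 < d /\ forall y1 y2, Rabs (y1 - x1) < d -> Rabs (y2 - x2) < d ->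
    Rabs (f (y1, y2) - f (x1, x2)) < e) -> continuous f (x1, x2).
Proof.
  intros H. apply (proj2 (filterlim_locally f (f (x1,x2)))).
  intros [e He]. destruct (H e He) as [d [Hd Hd']].
  exists (mkposreal d Hd). intros [y1 y2] [H1 H2]. apply Hd'; assumption.
Qed.

Lemma cmul {U : UniformSpace} (f g : U -> R) x : continuous f x -> continuous g x ->
  continuous (fun y => f y * g y) x.
Proof. intros; apply (continuous_mult f g); auto. Qed.
Lemma cplus {U : UniformSpace} (f g : U -> R) x : continuous f x -> continuous g x ->
  continuous (fun y => f y + g y) x.
Proof. intros; apply (continuous_plus f g); auto. Qed.
Lemma cminus {U : UniformSpace} (f g : U -> R) x : continuous f x -> continuous g x ->
  continuous (fun y => f y - g y) x.
Proof. intros; apply (continuous_minus f g); auto. Qed.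
Lemma copp {U : UniformSpace} (f : U -> R) x : continuous f x ->
  continuous (fun y => - f y) x.
Proof. intros; apply (continuous_opp f); auto. Qed.
Lemma cinv {U : UniformSpace} (f : U -> R) x : continuous f x -> f x <> 0 ->
  continuous (fun y => / f y) x.
Proof. intros. apply (continuous_comp f (fun y => / y)); auto. apply continuous_Rinv; auto. Qed.
Lemma cdiv {U : UniformSpace} (f g : U -> R) x : continuous f x -> continuous g x -> g x <> 0 ->
  continuous (fun y => f y / g y) x.
Proof. intros. unfold Rdiv. apply cmul; auto. apply cinv; auto. Qed.
Lemma cconst {U : UniformSpace} (c : R) (x : U) : continuous (fun _ => c) x.
Proof. apply continuous_const. Qed.

Ltac contsolve :=
  repeat first [ apply cmul | apply cplus | apply cminus | apply cconst
               | apply continuous_fst | apply continuous_snd ].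

Definition P4 := ((R * R) * (R * R))%type.
Definition p11 (p : P4) := fst (fst p).
Definition p12 (p : P4) := snd (fst p).
Definition p21 (p : P4) := fst (snd p).
Definition p22 (p : P4) := snd (snd p).

Lemma cp11 (p : P4) : continuous p11 p.
Proof. destruct p as [[a b] [c d]]. apply (continuous_comp fst fst). apply continuous_fst. apply continuous_fst. Qed.
Lemma cp12 (p : P4) : continuous p12 p.
Proof. destruct p as [[a b] [c d]]. apply (continuous_comp fst snd). apply continuous_fst. apply continuous_snd. Qed.
Lemma cp21 (p : P4) : continuous p21 p.
Proof. destruct p as [[a b] [c d]]. apply (continuous_comp snd fst). apply continuous_snd. apply continuous_fst. Qed.
Lemma cp22 (p : P4) : continuous p22 p.
Proof. destruct p as [[a b] [c d]]. apply (continuous_comp snd snd). apply continuous_snd. apply continuous_snd. Qed.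

Lemma cont4_eps (f : P4 -> R) a1 a2 b1 b2 : continuous f ((a1,a2),(b1,b2)) ->
  forall e, 0 < e -> exists d, 0 < d /\ forall x1 x2 y1 y2,
    Rabs (x1 - a1) < d -> Rabs (x2 - a2) < d -> Rabs (y1 - b1) < d -> Rabs (y2 - b2) < d ->
    Rabs (f ((x1,x2),(y1,y2)) - f ((a1,a2),(b1,b2))) < e.
Proof.
  intros Hc e He.
  destruct (proj1 (filterlim_locally f _) Hc (mkposreal e He)) as [d Hd].
  exists d; split; [apply cond_pos|]. intros x1 x2 y1 y2 H1 H2 H3 H4.
  apply (Hd ((x1,x2),(y1,y2))). split; split; assumption.
Qed.

(* Cramer: solution of A1 x + B1 y = v1, A2 x + B2 y = v2 *)
Definition crx v1 v2 A1 A2 B1 B2 := (v1 * B2 - v2 * B1) / (A1 * B2 - B1 * A2).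
Definition cry v1 v2 A1 A2 B1 B2 := (A1 * v2 - A2 * v1) / (A1 * B2 - B1 * A2).

Lemma cramer_cont v1 v2 A1 A2 B1 B2 : A1 * B2 - B1 * A2 <> 0 ->
  forall e, 0 < e -> exists d, 0 < d /\ forall a1 a2 b1 b2,
    Rabs (a1 - A1) < d -> Rabs (a2 - A2) < d -> Rabs (b1 - B1) < d -> Rabs (b2 - B2) < d ->
    Rabs (crx v1 v2 a1 a2 b1 b2 - crx v1 v2 A1 A2 B1 B2) < e /\
    Rabs (cry v1 v2 a1 a2 b1 b2 - cry v1 v2 A1 A2 B1 B2) < e.
Proof.
  intros HD e He.
  assert (Cx : continuous (fun p => crx v1 v2 (p11 p) (p12 p) (p21 p) (p22 p)) ((A1,A2),(B1,B2))).
  { unfold crx. apply cdiv.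
    - apply cminus; apply cmul; try apply cconst; try apply cp22; apply cp21.
    - apply cminus; apply cmul; (apply cp11 || apply cp12 || apply cp21 || apply cp22).
    - exact HD. }
  assert (Cy : continuous (fun p => cry v1 v2 (p11 p) (p12 p) (p21 p) (p22 p)) ((A1,A2),(B1,B2))).
  { unfold cry. apply cdiv.
    - apply cminus; apply cmul; (apply cconst || apply cp11 || apply cp12).
    - apply cminus; apply cmul; (apply cp11 || apply cp12 || apply cp21 || apply cp22).
    - exact HD. }
  destruct (cont4_eps _ _ _ _ _ Cx e He) as [d1 [Hd1 H1]].
  destruct (cont4_eps _ _ _ _ _ Cy e He) as [d2 [Hd2 H2]].
  exists (Rmin d1 d2); split. apply Rmin_pos; auto.
  intros a1 a2 b1 b2 h1 h2 h3 h4.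
  pose proof (Rmin_l d1 d2); pose proof (Rmin_r d1 d2).
  split.
  - apply (H1 a1 a2 b1 b2); lra.
  - apply (H2 a1 a2 b1 b2); lra.
Qed.

Lemma mvt_bound (f df : R -> R) lo hi m e :
  (forall x, lo <= x <= hi -> is_derive f x (df x)) ->
  (forall x, lo <= x <= hi -> Rabs (df x - m) <= e) ->
  forall x y, lo <= x <= hi -> lo <= y <= hi ->
  Rabs (f y - f x - m * (y - x)) <= e * Rabs (y - x).
Proof.
  intros Hd Hb x y Hx Hy.
  destruct (MVT_gen (fun t => f t - m * t) x y (fun t => df t - m)) as [c [Hc Hc']].
  - intros t Ht. apply (is_derive_minus f (fun t => m * t)).
    + apply Hd. pose proof (Rmin_l x y); pose proof (Rmin_r x y);
      pose proof (Rmax_l x y); pose proof (Rmax_r x y).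
      destruct (Rle_dec x y); [rewrite Rmin_left, Rmax_right in Ht by lra|
         rewrite Rmin_right, Rmax_left in Ht by lra]; lra.
    + auto_derive; auto; ring.
  - intros t Ht. apply continuity_pt_filterlim.
    apply (continuous_minus f (fun t => m * t)).
    + apply ex_derive_continuous. exists (df t). apply Hd.
      destruct (Rle_dec x y); [rewrite Rmin_left, Rmax_right in Ht by lra|
         rewrite Rmin_right, Rmax_left in Ht by lra]; lra.
    + apply (continuous_mult (fun _ => m) (fun t => t)). apply continuous_const. apply continuous_id.
  - assert (Hc2 : lo <= c <= hi).
    { destruct (Rle_dec x y); [rewrite Rmin_left, Rmax_right in Hc by lra|
         rewrite Rmin_right, Rmax_left in Hc by lra]; lra. }
    replace (f y - f x - m * (y - x)) with ((df c - m) * (y - x)) by lra.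
    rewrite Rabs_mult. apply Rmult_le_compat_r. apply Rabs_pos. apply Hb; auto.
Qed.

Lemma lip_continuity (g : R -> R) K : (forall x y, Rabs (g x - g y) <= K * Rabs (x - y)) ->
  continuity g.
Proof.
  intros H x. apply continuity_pt_filterlim. apply (proj2 (filterlim_locally g (g x))).
  intros [e He]. assert (HK : 0 < Rabs K + 1) by (pose proof (Rabs_pos K); lra).
  exists (mkposreal (e / (Rabs K + 1)) (Rdiv_lt_0_compat _ _ He HK)).
  intros y Hy. change (Rabs (g y - g x) < e). change (Rabs (y - x) < e / (Rabs K + 1)) in Hy.
  eapply Rle_lt_trans. apply H.
  apply Rle_lt_trans with ((Rabs K + 1) * Rabs (y - x)).
  - apply Rmult_le_compat_r. apply Rabs_pos. pose proof (Rle_abs K). lra.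
  - apply Rmult_lt_reg_l with (/ (Rabs K + 1)). apply Rinv_0_lt_compat; lra.
    rewrite <- Rmult_assoc, Rinv_l by lra. rewrite Rmult_1_l.
    unfold Rdiv in Hy. lra.
Qed.

Definition clamp lo hi x := Rmax lo (Rmin hi x).

Lemma clamp_lip lo hi x y : lo <= hi -> Rabs (clamp lo hi x - clamp lo hi y) <= Rabs (x - y).
Proof.
  intros H. unfold clamp.
  unfold Rmax, Rmin; repeat destruct Rle_dec; unfold Rabs; repeat destruct Rcase_abs; lra.
Qed.

Lemma clamp_in lo hi x : lo <= hi -> lo <= clamp lo hi x <= hi.
Proof. intros. unfold clamp, Rmax, Rmin; repeat destruct Rle_dec; lra. Qed.

Lemma clamp_id lo hi x : lo <= x <= hi -> clamp lo hi x = x.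
Proof. intros. unfold clamp, Rmax, Rmin; repeat destruct Rle_dec; lra. Qed.

Lemma ivt_lip (f : R -> R) lo hi L : lo < hi ->
  (forall x y, lo <= x <= hi -> lo <= y <= hi -> Rabs (f x - f y) <= L * Rabs (x - y)) ->
  f lo < 0 -> 0 < f hi -> exists x, lo < x < hi /\ f x = 0.
Proof.
  intros Hlh HL Hlo Hhi.
  set (g := fun x => f (clamp lo hi x)).
  assert (Hg : continuity g).
  { apply (lip_continuity g L). intros x y. unfold g.
    eapply Rle_trans. apply HL; apply clamp_in; lra.
    assert (0 <= L).
    { pose proof (HL lo hi) as Hx. assert (Rabs (f lo - f hi) <= L * Rabs (lo - hi)) by (apply Hx; lra).
      assert (0 < Rabs (lo - hi)) by (apply Rabs_pos_lt; lra).
      pose proof (Rabs_pos (f lo - f hi)). nra. }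
    apply Rmult_le_compat_l; auto. apply clamp_lip; lra. }
  destruct (IVT_gen g lo hi 0 Hg) as [x [Hx Hx']].
  - unfold g. rewrite !clamp_id by lra. unfold Rmin, Rmax; destruct Rle_dec; lra.
  - rewrite Rmin_left, Rmax_right in Hx by lra. unfold g in Hx'. rewrite clamp_id in Hx' by lra.
    exists x. split; auto. split.
    + destruct (Req_dec x lo); [subst; lra|lra].
    + destruct (Req_dec x hi); [subst; lra|lra].
Qed.

Lemma Rabs_le_iff x b : Rabs x <= b <-> -b <= x <= b.
Proof. unfold Rabs; destruct Rcase_abs; split; intros; lra. Qed.

Definition Bnd (t0 r : R) (f1 f2 g1 g2 : R -> R) := forall x y,
  Rabs (x - t0) <= r -> Rabs (y - t0) <= r ->
  Rabs (f1 y - f1 x - (y - x)) <= /8 * Rabs (y - x) /\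
  Rabs (f2 y - f2 x) <= /8 * Rabs (y - x) /\
  Rabs (g1 y - g1 x) <= /8 * Rabs (y - x) /\
  Rabs (g2 y - g2 x - (y - x)) <= /8 * Rabs (y - x).

Lemma bnd_inj t0 r f1 f2 g1 g2 : Bnd t0 r f1 f2 g1 g2 ->
  forall u w u' w', Rabs (u - t0) <= r -> Rabs (w - t0) <= r ->
   Rabs (u' - t0) <= r -> Rabs (w' - t0) <= r ->
   Rabs (u - u') + Rabs (w - w') <=
     4/3 * (Rabs ((f1 u + g1 w) - (f1 u' + g1 w')) + Rabs ((f2 u + g2 w) - (f2 u' + g2 w'))).
Proof.
  intros HB u w u' w' h1 h2 h3 h4.
  destruct (HB u' u h3 h1) as [A1 [A2 _]].
  destruct (HB w' w h4 h2) as [_ [_ [A3 A4]]].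
  set (du := u - u') in *. set (dw := w - w') in *.
  set (e1 := f1 u - f1 u' - du) in *. set (e3 := f2 u - f2 u') in *.
  set (e2 := g1 w - g1 w') in *. set (e4 := g2 w - g2 w' - dw) in *.
  replace ((f1 u + g1 w) - (f1 u' + g1 w')) with (du + e1 + e2) by (unfold e1, e2; ring).
  replace ((f2 u + g2 w) - (f2 u' + g2 w')) with (dw + e3 + e4) by (unfold e3, e4; ring).
  assert (T1 : Rabs du <= Rabs (du + e1 + e2) + Rabs e1 + Rabs e2).
  { replace du with ((du + e1 + e2) + (- e1) + (- e2)) at 1 by ring.
    eapply Rle_trans. apply Rabs_triang. rewrite Rabs_Ropp.
    apply Rplus_le_compat_r. eapply Rle_trans. apply Rabs_triang. rewrite Rabs_Ropp. lra. }
  assert (T2 : Rabs dw <= Rabs (dw + e3 + e4) + Rabs e3 + Rabs e4).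
  { replace dw with ((dw + e3 + e4) + (- e3) + (- e4)) at 1 by ring.
    eapply Rle_trans. apply Rabs_triang. rewrite Rabs_Ropp.
    apply Rplus_le_compat_r. eapply Rle_trans. apply Rabs_triang. rewrite Rabs_Ropp. lra. }
  lra.
Qed.

Lemma bnd_exist t0 r f1 f2 g1 g2 : 0 < r -> Bnd t0 r f1 f2 g1 g2 ->
  forall P1 P2, Rabs (P1 - (f1 t0 + g1 t0)) <= r / 4 -> Rabs (P2 - (f2 t0 + g2 t0)) <= r / 4 ->
  exists u w, Rabs (u - t0) <= r /\ Rabs (w - t0) <= r /\ f1 u + g1 w = P1 /\ f2 u + g2 w = P2.
Proof.
  intros Hr HB P1 P2 HP1 HP2.
  set (lo := t0 - r). set (hi := t0 + r).
  assert (Hin : forall x, lo <= x <= hi <-> Rabs (x - t0) <= r).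
  { intro x. rewrite Rabs_le_iff. unfold lo, hi. lra. }
  assert (HB' : forall x y, lo <= x <= hi -> lo <= y <= hi ->
    Rabs (f1 y - f1 x - (y - x)) <= /8 * Rabs (y - x) /\
    Rabs (f2 y - f2 x) <= /8 * Rabs (y - x) /\
    Rabs (g1 y - g1 x) <= /8 * Rabs (y - x) /\
    Rabs (g2 y - g2 x - (y - x)) <= /8 * Rabs (y - x)).
  { intros x y Hx Hy. apply HB; apply Hin; auto. }
  clear HB.
  assert (Ht0 : lo <= t0 <= hi) by (unfold lo,hi; lra).
  assert (Hlo : lo <= lo <= hi) by (unfold lo,hi; lra).
  assert (Hhi : lo <= hi <= hi) by (unfold lo,hi; lra).
  assert (S1 : forall w, lo <= w <= hi -> exists u, lo <= u <= hi /\ f1 u + g1 w = P1).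
  { intros w Hw.
    destruct (ivt_lip (fun u => f1 u + g1 w - P1) lo hi (9/8)) as [u [Hu Hu']].
    - unfold lo, hi; lra.
    - intros x y Hx Hy. destruct (HB' y x ltac:(auto) ltac:(auto)) as [A _].
      apply Rabs_le_iff in A. rewrite Rabs_le_iff. 
      replace (f1 x + g1 w - P1 - (f1 y + g1 w - P1)) with (f1 x - f1 y) by ring.
      pose proof (Rabs_pos (x - y)). 
      destruct (Rle_dec y x); [rewrite Rabs_right in * by lra | rewrite Rabs_left in * by lra]; lra.
    - destruct (HB' t0 lo ltac:(auto) ltac:(auto)) as [A _].
      destruct (HB' t0 w ltac:(auto) ltac:(auto)) as [_ [_ [B _]]].
      assert (E : Rabs (lo - t0) = r) by (unfold lo; replace (t0 - r - t0) with (-r) by ring;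
        rewrite Rabs_Ropp, Rabs_right; lra).
      rewrite E in A.
      assert (Rabs (w - t0) <= r) by (apply Hin; auto).
      apply Rabs_le_iff in A. apply Rabs_le_iff in B. apply Rabs_le_iff in HP1.
      unfold lo in *. nra.
    - destruct (HB' t0 hi ltac:(auto) ltac:(auto)) as [A _].
      destruct (HB' t0 w ltac:(auto) ltac:(auto)) as [_ [_ [B _]]].
      assert (E : Rabs (hi - t0) = r) by (unfold hi; replace (t0 + r - t0) with r by ring;
        rewrite Rabs_right; lra).
      rewrite E in A.
      assert (Rabs (w - t0) <= r) by (apply Hin; auto).
      apply Rabs_le_iff in A. apply Rabs_le_iff in B. apply Rabs_le_iff in HP1.
      unfold hi in *. nra.
    - exists u. split; [lra|]. lra. }
  set (U := fun w => epsilon (inhabits 0) (fun u => lo <= u <= hi /\ f1 u + g1 w = P1)).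
  assert (HU : forall w, lo <= w <= hi -> lo <= U w <= hi /\ f1 (U w) + g1 w = P1).
  { intros w Hw. unfold U. apply epsilon_spec. apply S1; auto. }
  assert (ULip : forall w w', lo <= w <= hi -> lo <= w' <= hi -> Rabs (U w - U w') <= /7 * Rabs (w - w')).
  { intros w w' Hw Hw'. destruct (HU w Hw) as [Hu Eu]. destruct (HU w' Hw') as [Hu' Eu'].
    destruct (HB' (U w') (U w) ltac:(auto) ltac:(auto)) as [A _].
    destruct (HB' w' w ltac:(auto) ltac:(auto)) as [_ [_ [B _]]].
    assert (E : f1 (U w) - f1 (U w') = - (g1 w - g1 w')) by lra.
    rewrite E in A.
    assert (T : Rabs (U w - U w') <= Rabs (g1 w - g1 w') + /8 * Rabs (U w - U w')).
    { revert A. generalize (U w - U w') (g1 w - g1 w'). intros d g A.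
      unfold Rabs in *; repeat destruct Rcase_abs; lra. }
    lra. }
  set (k := fun w => f2 (U w) + g2 w - P2).
  assert (Kmon : forall w w', lo <= w <= hi -> lo <= w' <= hi -> w' <= w ->
             k w - k w' >= (7/8 - /56) * (w - w')).
  { intros w w' Hw Hw' Hle. unfold k.
    destruct (HU w Hw) as [Hu _]. destruct (HU w' Hw') as [Hu' _].
    destruct (HB' (U w') (U w) ltac:(auto) ltac:(auto)) as [_ [A _]].
    destruct (HB' w' w ltac:(auto) ltac:(auto)) as [_ [_ [_ B]]].
    pose proof (ULip w w' Hw Hw').
    rewrite (Rabs_right (w - w')) in * by lra.
    apply Rabs_le_iff in A. apply Rabs_le_iff in B. lra. }
  assert (Kt0 : Rabs (k t0) <= 3 * r / 8).
  { unfold k.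
    destruct (HU t0 Ht0) as [Hu _].
    destruct (HB' t0 (U t0) ltac:(auto) ltac:(auto)) as [_ [A _]].
    assert (Rabs (U t0 - t0) <= r) by (apply Hin; auto).
    apply Rabs_le_iff. apply Rabs_le_iff in A. apply Rabs_le_iff in HP2.
    lra. }
  destruct (ivt_lip k lo hi (/56 + 9/8)) as [w [Hw Hw']].
  - unfold lo, hi; lra.
  - intros x y Hx Hy. unfold k.
    destruct (HU x Hx) as [Hu _]. destruct (HU y Hy) as [Hu' _].
    destruct (HB' (U y) (U x) ltac:(auto) ltac:(auto)) as [_ [A _]].
    destruct (HB' y x ltac:(auto) ltac:(auto)) as [_ [_ [_ B]]].
    pose proof (ULip x y Hx Hy).
    replace (f2 (U x) + g2 x - P2 - (f2 (U y) + g2 y - P2)) with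
      ((f2 (U x) - f2 (U y)) + (g2 x - g2 y - (x - y)) + (x - y)) by ring.
    eapply Rle_trans. apply Rabs_triang. eapply Rle_trans. apply Rplus_le_compat_r. apply Rabs_triang.
    lra.
  -     assert (lo <= lo <= hi) by (unfold lo, hi; lra).
    pose proof (Kmon t0 lo Ht0 H ltac:(unfold lo; lra)). apply Rabs_le_iff in Kt0.
    unfold lo in *. lra.
  -     assert (lo <= hi <= hi) by (unfold lo, hi; lra).
    pose proof (Kmon hi t0 H Ht0 ltac:(unfold hi; lra)). apply Rabs_le_iff in Kt0.
    unfold hi in *. lra.
  - assert (Hw2 : lo <= w <= hi) by lra.
    destruct (HU w Hw2) as [Hu Eu].
    exists (U w), w. split; [apply Hin; auto|]. split; [apply Hin; auto|]. split; auto.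
    unfold k in Hw'. lra.
Qed.

Lemma mvt_pt (f df : R -> R) lo hi :
  (forall x, lo <= x <= hi -> is_derive f x (df x)) ->
  forall x y, lo <= x <= hi -> lo <= y <= hi ->
  exists c, lo <= c <= hi /\ Rabs (c - x) <= Rabs (y - x) /\ f y - f x = df c * (y - x).
Proof.
  intros Hd x y Hx Hy.
  destruct (MVT_gen f x y df) as [c [Hc Hc']].
  - intros t Ht. apply Hd.
    destruct (Rle_dec x y); [rewrite Rmin_left, Rmax_right in Ht by lra|
         rewrite Rmin_right, Rmax_left in Ht by lra]; lra.
  - intros t Ht. apply continuity_pt_filterlim.
    apply (ex_derive_continuous f t). exists (df t). apply Hd.
    destruct (Rle_dec x y); [rewrite Rmin_left, Rmax_right in Ht by lra|
         rewrite Rmin_right, Rmax_left in Ht by lra]; lra.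
  - exists c. destruct (Rle_dec x y); [rewrite Rmin_left, Rmax_right in Hc by lra|
         rewrite Rmin_right, Rmax_left in Hc by lra].
    + split; [lra|]. split; auto. rewrite !Rabs_right by lra. lra.
    + split; [lra|]. split; auto. rewrite !Rabs_left1 by lra. lra.
Qed.

Lemma cramer_solve a1 a2 b1 b2 x y v1 v2 : a1 * b2 - b1 * a2 <> 0 ->
  a1 * x + b1 * y = v1 -> a2 * x + b2 * y = v2 ->
  x = crx v1 v2 a1 a2 b1 b2 /\ y = cry v1 v2 a1 a2 b1 b2.
Proof.
  intros HD E1 E2. unfold crx, cry. subst v1 v2. split; field; auto.
Qed.

Lemma crx_scal h v1 v2 a1 a2 b1 b2 : crx (h * v1) (h * v2) a1 a2 b1 b2 = h * crx v1 v2 a1 a2 b1 b2.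
Proof. unfold crx, Rdiv. ring. Qed.
Lemma cry_scal h v1 v2 a1 a2 b1 b2 : cry (h * v1) (h * v2) a1 a2 b1 b2 = h * cry v1 v2 a1 a2 b1 b2.
Proof. unfold cry, Rdiv. ring. Qed.

Lemma dir_deriv (f1 f2 g1 g2 df1 df2 dg1 dg2 : R -> R) lo hi (gu gw : R -> R) s0 v1 v2 C d0 :
  (forall x, lo <= x <= hi -> is_derive f1 x (df1 x) /\ is_derive f2 x (df2 x) /\
                              is_derive g1 x (dg1 x) /\ is_derive g2 x (dg2 x)) ->
  continuous df1 (gu s0) -> continuous df2 (gu s0) ->
  continuous dg1 (gw s0) -> continuous dg2 (gw s0) ->
  (forall a1 a2 b1 b2, lo <= a1 <= hi -> lo <= a2 <= hi -> lo <= b1 <= hi -> lo <= b2 <= hi ->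
     df1 a1 * dg2 b2 - dg1 b1 * df2 a2 <> 0) ->
  0 < d0 ->
  (forall s, Rabs (s - s0) < d0 -> lo <= gu s <= hi /\ lo <= gw s <= hi /\
     f1 (gu s) + g1 (gw s) = f1 (gu s0) + g1 (gw s0) + (s - s0) * v1 /\
     f2 (gu s) + g2 (gw s) = f2 (gu s0) + g2 (gw s0) + (s - s0) * v2 /\
     Rabs (gu s - gu s0) + Rabs (gw s - gw s0) <= C * Rabs (s - s0)) ->
  is_derive gu s0 (crx v1 v2 (df1 (gu s0)) (df2 (gu s0)) (dg1 (gw s0)) (dg2 (gw s0))) /\
  is_derive gw s0 (cry v1 v2 (df1 (gu s0)) (df2 (gu s0)) (dg1 (gw s0)) (dg2 (gw s0))).
Proof.
  intros Hd C1 C2 C3 C4 Hdet Hd0 Hg.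
  set (u0 := gu s0) in *. set (w0 := gw s0) in *.
  assert (Hs0 := Hg s0 ltac:(rewrite Rminus_eq_0, Rabs_R0; lra)).
  destruct Hs0 as [Hu0 [Hw0 _]].
  assert (HD0 : df1 u0 * dg2 w0 - dg1 w0 * df2 u0 <> 0) by (apply Hdet; auto).
  assert (key : forall e, 0 < e -> exists d, 0 < d /\ forall h, h <> 0 -> Rabs h < d ->
     Rabs ((gu (s0 + h) - u0) / h - crx v1 v2 (df1 u0) (df2 u0) (dg1 w0) (dg2 w0)) < e /\
     Rabs ((gw (s0 + h) - w0) / h - cry v1 v2 (df1 u0) (df2 u0) (dg1 w0) (dg2 w0)) < e).
  { intros e He.
    destruct (cramer_cont v1 v2 _ _ _ _ HD0 e He) as [d [Hd1 Hcr]].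
    destruct (cont_eps _ _ C1 d Hd1) as [e1 [He1 H1]].
    destruct (cont_eps _ _ C2 d Hd1) as [e2 [He2 H2]].
    destruct (cont_eps _ _ C3 d Hd1) as [e3 [He3 H3]].
    destruct (cont_eps _ _ C4 d Hd1) as [e4 [He4 H4]].
    set (em := Rmin (Rmin e1 e2) (Rmin e3 e4)).
    assert (Hem : 0 < em) by (unfold em; repeat apply Rmin_pos; auto).
    assert (em1 : em <= e1) by (unfold em; pose proof (Rmin_l (Rmin e1 e2) (Rmin e3 e4));
      pose proof (Rmin_l e1 e2); lra).
    assert (em2 : em <= e2) by (unfold em; pose proof (Rmin_l (Rmin e1 e2) (Rmin e3 e4));
      pose proof (Rmin_r e1 e2); lra).
    assert (em3 : em <= e3) by (unfold em; pose proof (Rmin_r (Rmin e1 e2) (Rmin e3 e4));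
      pose proof (Rmin_l e3 e4); lra).
    assert (em4 : em <= e4) by (unfold em; pose proof (Rmin_r (Rmin e1 e2) (Rmin e3 e4));
      pose proof (Rmin_r e3 e4); lra).
    assert (HC : 0 < Rabs C + 1) by (pose proof (Rabs_pos C); lra).
    exists (Rmin d0 (em / (Rabs C + 1))). split.
    { apply Rmin_pos; auto. apply Rdiv_lt_0_compat; auto. }
    intros h Hh0 Hh.
    pose proof (Rmin_l d0 (em / (Rabs C + 1))) as m1.
    pose proof (Rmin_r d0 (em / (Rabs C + 1))) as m2.
    destruct (Hg (s0 + h) ltac:(replace (s0 + h - s0) with h by ring; lra)) as [Hu [Hw [E1 [E2 Hl]]]].
    replace (s0 + h - s0) with h in * by ring.
    set (du := gu (s0 + h) - u0) in *. set (dw := gw (s0 + h) - w0) in *.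
    assert (Hsmall : Rabs du + Rabs dw < em).
    { eapply Rle_lt_trans. apply Hl.
      apply Rle_lt_trans with ((Rabs C + 1) * Rabs h).
      - apply Rmult_le_compat_r. apply Rabs_pos. pose proof (Rle_abs C). lra.
      - apply Rmult_lt_reg_l with (/ (Rabs C + 1)). apply Rinv_0_lt_compat; lra.
        rewrite <- Rmult_assoc, Rinv_l by lra. rewrite Rmult_1_l. unfold Rdiv in m2. lra. }
    pose proof (Rabs_pos du). pose proof (Rabs_pos dw).
    destruct (mvt_pt f1 df1 lo hi (fun x H => proj1 (Hd x H)) u0 (gu (s0+h)) Hu0 Hu) as [a1 [Ha1 [Ha1' Ea1]]].
    destruct (mvt_pt f2 df2 lo hi (fun x H => proj1 (proj2 (Hd x H))) u0 (gu (s0+h)) Hu0 Hu) as [a2 [Ha2 [Ha2' Ea2]]].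
    destruct (mvt_pt g1 dg1 lo hi (fun x H => proj1 (proj2 (proj2 (Hd x H)))) w0 (gw (s0+h)) Hw0 Hw) as [b1 [Hb1 [Hb1' Eb1]]].
    destruct (mvt_pt g2 dg2 lo hi (fun x H => proj2 (proj2 (proj2 (Hd x H)))) w0 (gw (s0+h)) Hw0 Hw) as [b2 [Hb2 [Hb2' Eb2]]].
    fold du in Ea1, Ea2, Ha1', Ha2'. fold dw in Eb1, Eb2, Hb1', Hb2'.
    destruct (cramer_solve (df1 a1) (df2 a2) (dg1 b1) (dg2 b2) du dw (h * v1) (h * v2))
      as [Sx Sy].
    { apply Hdet; auto. }
    { lra. }
    { lra. }
    rewrite crx_scal in Sx. rewrite cry_scal in Sy.
    assert (Q1 : du / h = crx v1 v2 (df1 a1) (df2 a2) (dg1 b1) (dg2 b2)) by (rewrite Sx; field; auto).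
    assert (Q2 : dw / h = cry v1 v2 (df1 a1) (df2 a2) (dg1 b1) (dg2 b2)) by (rewrite Sy; field; auto).
    rewrite Q1, Q2. apply Hcr.
    - apply H1. lra.
    - apply H2. lra.
    - apply H3. lra.
    - apply H4. lra. }
  split; apply is_derive_Reals; intros e He; destruct (key e He) as [d [Hd' Hk]];
    exists (mkposreal d Hd'); intros h Hh0 Hh; apply (Hk h Hh0 Hh).
Qed.

Lemma deriv_bound (f : R -> R) x l : is_derive f x l ->
  forall e, 0 < e -> exists d, 0 < d /\ forall y, Rabs (y - x) < d ->
    Rabs (f y - f x - l * (y - x)) <= e * Rabs (y - x).
Proof.
  intros H e He. apply is_derive_Reals in H. destruct (H e He) as [d Hd].
  exists d. split; [apply cond_pos|]. intros y Hy.
  destruct (Req_dec y x) as [E|E].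
  - subst. replace (x - x) with 0 by ring. rewrite Rabs_R0. replace (f x - f x - l * 0) with 0 by ring.
    rewrite Rabs_R0. lra.
  - specialize (Hd (y - x) ltac:(lra) Hy). replace (x + (y - x)) with y in Hd by ring.
    assert (Hp : 0 < Rabs (y - x)) by (apply Rabs_pos_lt; lra).
    replace (f y - f x - l * (y - x)) with (((f y - f x) / (y - x) - l) * (y - x)) by (field; lra).
    rewrite Rabs_mult. apply Rmult_le_compat_r; lra.
Qed.

Lemma between_abs a b x : Rmin a b <= x <= Rmax a b -> Rabs (x - a) <= Rabs (b - a).
Proof.
  intros H. destruct (Rle_dec a b).
  - rewrite Rmin_left, Rmax_right in H by lra. rewrite !Rabs_right by lra. lra.
  - rewrite Rmin_right, Rmax_left in H by lra. rewrite !Rabs_left1 by lra. lra.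
Qed.

Lemma diff_partials (Phi Phiu : R -> R -> R) u0 w0 lw :
  (exists d, 0 < d /\ forall u w, Rabs (u - u0) < d -> Rabs (w - w0) < d ->
      is_derive (fun x => Phi x w) u (Phiu u w)) ->
  continuous (fun p : R * R => Phiu (fst p) (snd p)) (u0, w0) ->
  is_derive (fun w => Phi u0 w) w0 lw ->
  differentiable_pt_lim Phi u0 w0 (Phiu u0 w0) lw.
Proof.
  intros [d [Hd HPu]] Hc Hw eps.
  assert (He2 : 0 < eps / 2) by (pose proof (cond_pos eps); lra).
  destruct (cont2_eps _ _ _ Hc _ He2) as [d1 [Hd1 H1]].
  destruct (deriv_bound _ _ _ Hw _ He2) as [d2 [Hd2 H2]].
  set (dm := Rmin d (Rmin d1 d2)).
  assert (Hdm : 0 < dm) by (unfold dm; repeat apply Rmin_pos; auto).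
  assert (dm <= d) by (unfold dm; apply Rmin_l).
  assert (dm <= d1) by (unfold dm; pose proof (Rmin_r d (Rmin d1 d2)); pose proof (Rmin_l d1 d2); lra).
  assert (dm <= d2) by (unfold dm; pose proof (Rmin_r d (Rmin d1 d2)); pose proof (Rmin_r d1 d2); lra).
  exists (mkposreal dm Hdm). simpl. intros u w Hu Hw'.
  destruct (mvt_pt (fun x => Phi x w) (fun x => Phiu x w) (Rmin u0 u) (Rmax u0 u)) with (x := u0) (y := u)
    as [xi [Hxi [Hxi' Exi]]].
  - intros x Hx. apply HPu; [|lra].
    pose proof (between_abs u0 u x Hx). lra.
  - split; [apply Rmin_l | apply Rmax_l].
  - split; [apply Rmin_r | apply Rmax_r].
  - simpl in Exi.
    assert (Hxi2 : Rabs (xi - u0) < d1) by lra.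
    specialize (H1 xi w Hxi2 ltac:(lra)). simpl in H1.
    specialize (H2 w ltac:(lra)).
    replace (Phi u w - Phi u0 w0 - (Phiu u0 w0 * (u - u0) + lw * (w - w0))) with
      ((Phiu xi w - Phiu u0 w0) * (u - u0) + (Phi u0 w - Phi u0 w0 - lw * (w - w0))) by lra.
    eapply Rle_trans. apply Rabs_triang. rewrite Rabs_mult.
    pose proof (Rmax_l (Rabs (u - u0)) (Rabs (w - w0))).
    pose proof (Rmax_r (Rabs (u - u0)) (Rabs (w - w0))).
    pose proof (Rabs_pos (u - u0)). pose proof (Rabs_pos (Phiu xi w - Phiu u0 w0)).
    assert (Rabs (Phiu xi w - Phiu u0 w0) * Rabs (u - u0) <= eps / 2 * Rabs (u - u0)).
    { apply Rmult_le_compat_r; lra. }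
    pose proof (cond_pos eps). nra.
Qed.

Lemma chain2 (Phi Phiu : R -> R -> R) (g1 g2 : R -> R) s0 l1 l2 lw :
  is_derive g1 s0 l1 -> is_derive g2 s0 l2 ->
  (exists d, 0 < d /\ forall u w, Rabs (u - g1 s0) < d -> Rabs (w - g2 s0) < d ->
      is_derive (fun x => Phi x w) u (Phiu u w)) ->
  continuous (fun p : R * R => Phiu (fst p) (snd p)) (g1 s0, g2 s0) ->
  is_derive (fun w => Phi (g1 s0) w) (g2 s0) lw ->
  is_derive (fun s => Phi (g1 s) (g2 s)) s0 (Phiu (g1 s0) (g2 s0) * l1 + lw * l2).
Proof.
  intros D1 D2 HP HC HW. apply is_derive_Reals.
  apply derivable_pt_lim_comp_2d.
  - apply diff_partials; auto.
  - apply is_derive_Reals; auto.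
  - apply is_derive_Reals; auto.
Qed.

Lemma bi_alg a1 a2 ax b1 b2 bx P1u P1w P2u P2w p q :
  a1 * b2 - b1 * a2 <> 0 ->
  p * a1 + q * a2 = ax -> p * b1 + q * b2 = bx ->
  P1w * a1 + P2w * a2 = 0 -> P1u * b1 + P2u * b2 = 0 ->
  ax ^ 2 + a1 ^ 2 - a2 ^ 2 = 0 -> bx ^ 2 + b1 ^ 2 - b2 ^ 2 = 0 ->
  (1 - q ^ 2) * (P1u * (b2 / (a1 * b2 - b1 * a2)) + P1w * (- a2 / (a1 * b2 - b1 * a2)))
  + 2 * p * q * (P1u * (- b1 / (a1 * b2 - b1 * a2)) + P1w * (a1 / (a1 * b2 - b1 * a2)))
  - (1 + p ^ 2) * (P2u * (- b1 / (a1 * b2 - b1 * a2)) + P2w * (a1 / (a1 * b2 - b1 * a2))) = 0.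
Proof.
  intros HD E1 E2 E3 E4 N1 N2.
  assert (Ha2 : a2 <> 0).
  { intro Z. subst a2. apply HD. assert (a1 = 0) by nra. subst. ring. }
  assert (Hb2 : b2 <> 0).
  { intro Z. subst b2. apply HD. assert (b1 = 0) by nra. subst. ring. }
  subst ax bx.
  set (T := (1 - q ^ 2) * (P1u * b2 - P1w * a2) + 2 * p * q * (- P1u * b1 + P1w * a1)
             - (1 + p ^ 2) * (- P2u * b1 + P2w * a1)).
  assert (H : T * (a2 * b2) = 0).
  { unfold T.
    replace (((1 - q ^ 2) * (P1u * b2 - P1w * a2) + 2 * p * q * (- P1u * b1 + P1w * a1)
             - (1 + p ^ 2) * (- P2u * b1 + P2w * a1)) * (a2 * b2)) with
     ( - P1u * a2 * ((p * b1 + q * b2) ^ 2 + b1 ^ 2 - b2 ^ 2) + P1w * b2 * ((p * a1 + q * a2) ^ 2 + a1 ^ 2 - a2 ^ 2)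
       + (1 + p^2) * b1 * a2 * (P1u * b1 + P2u * b2) - (1 + p^2) * a1 * b2 * (P1w * a1 + P2w * a2)) by ring.
    rewrite E3, E4, N1, N2. ring. }
  assert (HT : T = 0).
  { apply Rmult_integral in H. destruct H as [H|H]; auto.
    apply Rmult_integral in H. destruct H; contradiction. }
  replace 0 with (T / (a1 * b2 - b1 * a2)) by (rewrite HT; field; auto).
  unfold T. field. auto.
Qed.

Definition C2n (f : R -> R) (t0 R0 : R) := forall u, Rabs (u - t0) < R0 ->
  ex_derive f u /\ ex_derive (Derive f) u /\ continuous (Derive (Derive f)) u.

Lemma c2_d f t0 R0 u : C2n f t0 R0 -> Rabs (u - t0) < R0 -> is_derive f u (Derive f u).
Proof. intros H Hu. apply Derive_correct. apply (H u Hu). Qed.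
Lemma c2_dd f t0 R0 u : C2n f t0 R0 -> Rabs (u - t0) < R0 -> is_derive (Derive f) u (Derive (Derive f) u).
Proof. intros H Hu. apply Derive_correct. apply (H u Hu). Qed.
Lemma c2_cd f t0 R0 u : C2n f t0 R0 -> Rabs (u - t0) < R0 -> continuous (Derive f) u.
Proof. intros H Hu. apply (ex_derive_continuous (Derive f) u). apply (H u Hu). Qed.
Lemma c2_c f t0 R0 u : C2n f t0 R0 -> Rabs (u - t0) < R0 -> continuous f u.
Proof. intros H Hu. apply (ex_derive_continuous f u). apply (H u Hu). Qed.
Lemma c2_cdd f t0 R0 u : C2n f t0 R0 -> Rabs (u - t0) < R0 -> continuous (Derive (Derive f)) u.
Proof. intros H Hu. apply (H u Hu). Qed.

Lemma c2_ex f t0 R0 u : C2n f t0 R0 -> Rabs (u - t0) < R0 -> ex_derive f u.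
Proof. intros H Hu. apply (H u Hu). Qed.
Lemma c2_exd f t0 R0 u : C2n f t0 R0 -> Rabs (u - t0) < R0 -> ex_derive (Derive f) u.
Proof. intros H Hu. apply (H u Hu). Qed.

Lemma catom1 (f : R -> R) (p : R * R) : continuous f (fst p) -> continuous (fun q : R * R => f (fst q)) p.
Proof. intros H. destruct p. apply (continuous_comp fst f). apply continuous_fst. exact H. Qed.
Lemma catom2 (f : R -> R) (p : R * R) : continuous f (snd p) -> continuous (fun q : R * R => f (snd q)) p.
Proof. intros H. destruct p. apply (continuous_comp snd f). apply continuous_snd. exact H. Qed.

Lemma is_derive_val (f : R -> R) (x l l' : R) : is_derive f x l -> l = l' -> is_derive f x l'.
Proof. intros H E; subst; auto. Qed.

Ltac etafix := repeat match goal with |- context [Derive (fun y => ?f y) ?x] =>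
  change (Derive (fun y => f y) x) with (Derive f x) end.

Section Chart.
Variables (t0 R0 : R) (A1 A2 Ax B1 B2 Bx : R -> R).
Hypothesis HR0 : 0 < R0.
Hypothesis CA1 : C2n A1 t0 R0.
Hypothesis CA2 : C2n A2 t0 R0.
Hypothesis CAx : C2n Ax t0 R0.
Hypothesis CB1 : C2n B1 t0 R0.
Hypothesis CB2 : C2n B2 t0 R0.
Hypothesis CBx : C2n Bx t0 R0.
Hypothesis nullA : forall u, Rabs (u - t0) < R0 ->
  (Derive Ax u) ^ 2 + (Derive A1 u) ^ 2 - (Derive A2 u) ^ 2 = 0.
Hypothesis nullB : forall u, Rabs (u - t0) < R0 ->
  (Derive Bx u) ^ 2 + (Derive B1 u) ^ 2 - (Derive B2 u) ^ 2 = 0.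
Hypothesis det0 : Derive A1 t0 * Derive B2 t0 - Derive B1 t0 * Derive A2 t0 <> 0.

Let a1 := Derive A1. Let a2 := Derive A2. Let ax := Derive Ax.
Let b1 := Derive B1. Let b2 := Derive B2. Let bx := Derive Bx.
Let D0 := a1 t0 * b2 t0 - b1 t0 * a2 t0.
Let n11 := b2 t0 / D0. Let n12 := - b1 t0 / D0.
Let n21 := - a2 t0 / D0. Let n22 := a1 t0 / D0.
Let f1 x := n11 * A1 x + n12 * A2 x.
Let f2 x := n21 * A1 x + n22 * A2 x.
Let g1 x := n11 * B1 x + n12 * B2 x.
Let g2 x := n21 * B1 x + n22 * B2 x.
Let df1 x := n11 * a1 x + n12 * a2 x.
Let df2 x := n21 * a1 x + n22 * a2 x.
Let dg1 x := n11 * b1 x + n12 * b2 x.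
Let dg2 x := n21 * b1 x + n22 * b2 x.

Lemma detN : n11 * n22 - n12 * n21 = / D0.
Proof. unfold n11, n12, n21, n22, D0 in *. field. exact det0. Qed.

Lemma detN_nz : n11 * n22 - n12 * n21 <> 0.
Proof. rewrite detN. apply Rinv_neq_0_compat. exact det0. Qed.

Lemma df_t0 : df1 t0 = 1 /\ df2 t0 = 0 /\ dg1 t0 = 0 /\ dg2 t0 = 1.
Proof.
  unfold df1, df2, dg1, dg2, n11, n12, n21, n22.
  fold D0. assert (D0 <> 0) by exact det0.
  unfold D0 in *. repeat split; field; auto.
Qed.

Lemma deriv_all x : Rabs (x - t0) < R0 ->
  is_derive f1 x (df1 x) /\ is_derive f2 x (df2 x) /\ is_derive g1 x (dg1 x) /\ is_derive g2 x (dg2 x).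
Proof.
  intros Hx.
  pose proof (c2_d _ _ _ _ CA1 Hx). pose proof (c2_d _ _ _ _ CA2 Hx).
  pose proof (c2_d _ _ _ _ CB1 Hx). pose proof (c2_d _ _ _ _ CB2 Hx).
  unfold f1, f2, g1, g2, df1, df2, dg1, dg2.
  split; [|split; [|split]]; (auto_derive; repeat split; try (eexists; eassumption)). all: unfold a1,a2,b1,b2; etafix; ring.
Qed.

Lemma cont_all x : Rabs (x - t0) < R0 ->
  continuous df1 x /\ continuous df2 x /\ continuous dg1 x /\ continuous dg2 x.
Proof.
  intros Hx.
  pose proof (c2_cd _ _ _ _ CA1 Hx). pose proof (c2_cd _ _ _ _ CA2 Hx).
  pose proof (c2_cd _ _ _ _ CB1 Hx). pose proof (c2_cd _ _ _ _ CB2 Hx).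
  unfold df1, df2, dg1, dg2.
  repeat split; apply cplus; apply cmul; auto; apply cconst.
Qed.

Definition rgood (r : R) := 0 < r /\ 4 * r < R0 /\ forall x, Rabs (x - t0) <= 2 * r ->
  Rabs (df1 x - 1) <= /8 /\ Rabs (df2 x) <= /8 /\ Rabs (dg1 x) <= /8 /\ Rabs (dg2 x - 1) <= /8.

Lemma rgood_ex : exists r, rgood r.
Proof.
  assert (Ht : Rabs (t0 - t0) < R0) by (rewrite Rminus_eq_0, Rabs_R0; lra).
  destruct (cont_all t0 Ht) as [C1 [C2 [C3 C4]]].
  destruct df_t0 as [E1 [E2 [E3 E4]]].
  assert (He : 0 < /8) by lra.
  destruct (cont_eps _ _ C1 _ He) as [d1 [Hd1 H1]].
  destruct (cont_eps _ _ C2 _ He) as [d2 [Hd2 H2]].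
  destruct (cont_eps _ _ C3 _ He) as [d3 [Hd3 H3]].
  destruct (cont_eps _ _ C4 _ He) as [d4 [Hd4 H4]].
  set (m := Rmin (Rmin d1 d2) (Rmin (Rmin d3 d4) R0)).
  assert (m1 : m <= d1) by (unfold m; pose proof (Rmin_l (Rmin d1 d2) (Rmin (Rmin d3 d4) R0)); pose proof (Rmin_l d1 d2); lra).
  assert (m2 : m <= d2) by (unfold m; pose proof (Rmin_l (Rmin d1 d2) (Rmin (Rmin d3 d4) R0)); pose proof (Rmin_r d1 d2); lra).
  assert (m3 : m <= d3) by (unfold m; pose proof (Rmin_r (Rmin d1 d2) (Rmin (Rmin d3 d4) R0)); pose proof (Rmin_l (Rmin d3 d4) R0); pose proof (Rmin_l d3 d4); lra).
  assert (m4 : m <= d4) by (unfold m; pose proof (Rmin_r (Rmin d1 d2) (Rmin (Rmin d3 d4) R0)); pose proof (Rmin_l (Rmin d3 d4) R0); pose proof (Rmin_r d3 d4); lra).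
  assert (m5 : m <= R0) by (unfold m; pose proof (Rmin_r (Rmin d1 d2) (Rmin (Rmin d3 d4) R0)); pose proof (Rmin_r (Rmin d3 d4) R0); lra).
  assert (mp : 0 < m) by (unfold m; repeat apply Rmin_pos; auto).
  exists (m / 8). split; [lra|]. split; [lra|].
  intros x Hx. 
  specialize (H1 x ltac:(lra)). specialize (H2 x ltac:(lra)).
  specialize (H3 x ltac:(lra)). specialize (H4 x ltac:(lra)).
  rewrite E1 in H1. rewrite E2 in H2. rewrite E3 in H3. rewrite E4 in H4.
  rewrite Rminus_0_r in H2, H3. lra.
Qed.

Definition rr := epsilon (inhabits 0) rgood.
Lemma rr_good : rgood rr.
Proof. unfold rr. apply epsilon_spec. apply rgood_ex. Qed.

Lemma rr_pos : 0 < rr.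
Proof. apply rr_good. Qed.
Lemma rr_R0 : 4 * rr < R0.
Proof. apply rr_good. Qed.

Lemma box_R0 x : Rabs (x - t0) <= rr -> Rabs (x - t0) < R0.
Proof. pose proof rr_R0; pose proof rr_pos. lra. Qed.
Lemma box2_R0 x : Rabs (x - t0) <= 2 * rr -> Rabs (x - t0) < R0.
Proof. pose proof rr_R0; pose proof rr_pos. lra. Qed.

Lemma bnd : Bnd t0 rr f1 f2 g1 g2.
Proof.
  destruct rr_good as [Hr [HR Hb]].
  intros x y Hx Hy.
  assert (Hd : forall z, t0 - rr <= z <= t0 + rr -> is_derive f1 z (df1 z) /\ is_derive f2 z (df2 z) /\ is_derive g1 z (dg1 z) /\ is_derive g2 z (dg2 z)).
  { intros z Hz. apply deriv_all. apply box_R0. apply Rabs_le_iff. lra. }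
  assert (Hb' : forall z, t0 - rr <= z <= t0 + rr -> Rabs (df1 z - 1) <= /8 /\ Rabs (df2 z) <= /8 /\ Rabs (dg1 z) <= /8 /\ Rabs (dg2 z - 1) <= /8).
  { intros z Hz. apply Hb. apply Rabs_le_iff. lra. }
  clear Hb. apply Rabs_le_iff in Hx. apply Rabs_le_iff in Hy.
  assert (Hx' : t0 - rr <= x <= t0 + rr) by lra. assert (Hy' : t0 - rr <= y <= t0 + rr) by lra.
  split; [|split; [|split]].
  - replace (f1 y - f1 x - (y - x)) with (f1 y - f1 x - 1 * (y - x)) by ring.
    apply (mvt_bound f1 df1 (t0 - rr) (t0 + rr) 1 (/8)); auto.
    + intros z Hz; apply Hd; auto.
    + intros z Hz; apply Hb'; auto.
  - replace (f2 y - f2 x) with (f2 y - f2 x - 0 * (y - x)) by ring.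
    apply (mvt_bound f2 df2 (t0 - rr) (t0 + rr) 0 (/8)); auto.
    + intros z Hz; apply Hd; auto.
    + intros z Hz; rewrite Rminus_0_r; apply Hb'; auto.
  - replace (g1 y - g1 x) with (g1 y - g1 x - 0 * (y - x)) by ring.
    apply (mvt_bound g1 dg1 (t0 - rr) (t0 + rr) 0 (/8)); auto.
    + intros z Hz; apply Hd; auto.
    + intros z Hz; rewrite Rminus_0_r; apply Hb'; auto.
  - replace (g2 y - g2 x - (y - x)) with (g2 y - g2 x - 1 * (y - x)) by ring.
    apply (mvt_bound g2 dg2 (t0 - rr) (t0 + rr) 1 (/8)); auto.
    + intros z Hz; apply Hd; auto.
    + intros z Hz; apply Hb'; auto.
Qed.

Lemma det_pos a b c d : Rabs (a - t0) <= 2 * rr -> Rabs (b - t0) <= 2 * rr -> Rabs (c - t0) <= 2 * rr -> Rabs (d - t0) <= 2 * rr ->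
  df1 a * dg2 d - dg1 c * df2 b >= 3/4.
Proof.
  destruct rr_good as [_ [_ Hb]]. intros Ha Hb_ Hc Hd.
  destruct (Hb a Ha) as [X1 _]. destruct (Hb b Hb_) as [_ [X2 _]].
  destruct (Hb c Hc) as [_ [_ [X3 _]]]. destruct (Hb d Hd) as [_ [_ [_ X4]]].
  apply Rabs_le_iff in X1. apply Rabs_le_iff in X2. apply Rabs_le_iff in X3. apply Rabs_le_iff in X4.
  nra.
Qed.

Let Dl u w := a1 u * b2 w - b1 w * a2 u.

Lemma Dl_rel u w : df1 u * dg2 w - dg1 w * df2 u = (n11 * n22 - n12 * n21) * Dl u w.
Proof. unfold df1, df2, dg1, dg2, Dl. ring. Qed.

Lemma Dl_nz u w : Rabs (u - t0) <= 2 * rr -> Rabs (w - t0) <= 2 * rr -> Dl u w <> 0.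
Proof.
  intros Hu Hw E. pose proof (det_pos u u w w Hu Hu Hw Hw). rewrite Dl_rel, E in H. lra.
Qed.


Let K := Rabs n11 + Rabs n12 + Rabs n21 + Rabs n22 + 1.
Let rho := rr / (4 * K).
Let y0 := A1 t0 + B1 t0.
Let z0 := A2 t0 + B2 t0.

Lemma K_pos : 0 < K.
Proof. unfold K. pose proof (Rabs_pos n11). pose proof (Rabs_pos n12).
  pose proof (Rabs_pos n21). pose proof (Rabs_pos n22). lra. Qed.

Lemma rho_pos : 0 < rho.
Proof. unfold rho. pose proof K_pos. pose proof rr_pos. apply Rdiv_lt_0_compat; lra. Qed.

Lemma lin_bound a b X Y : Rabs (a * X + b * Y) <= Rabs a * Rabs X + Rabs b * Rabs Y.
Proof. eapply Rle_trans. apply Rabs_triang. rewrite !Rabs_mult. lra. Qed.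

Definition Dom y z := Rabs (y - y0) < rho /\ Rabs (z - z0) < rho.

Definition Gprop y z (p : R * R) := Rabs (fst p - t0) <= rr /\ Rabs (snd p - t0) <= rr /\
   A1 (fst p) + B1 (snd p) = y /\ A2 (fst p) + B2 (snd p) = z.
Definition Gp y z := epsilon (inhabits (0, 0)) (Gprop y z).
Definition G1 y z := fst (Gp y z).
Definition G2 y z := snd (Gp y z).

Lemma Gspec y z : Dom y z -> Rabs (G1 y z - t0) <= rr /\ Rabs (G2 y z - t0) <= rr /\
   A1 (G1 y z) + B1 (G2 y z) = y /\ A2 (G1 y z) + B2 (G2 y z) = z.
Proof.
  intros [Hy Hz]. unfold G1, G2, Gp. apply (epsilon_spec (inhabits (0,0)) (Gprop y z)).
  pose proof K_pos as HK. pose proof rr_pos as Hr.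
  assert (Hrho : K * rho = rr / 4) by (unfold rho; field; lra).
  destruct (bnd_exist t0 rr f1 f2 g1 g2 rr_pos bnd (n11 * y + n12 * z) (n21 * y + n22 * z))
    as [u [w [Hu [Hw [E1 E2]]]]].
  - replace (n11 * y + n12 * z - (f1 t0 + g1 t0)) with (n11 * (y - y0) + n12 * (z - z0))
      by (unfold f1, g1, y0, z0; ring).
    eapply Rle_trans. apply lin_bound.
    pose proof (Rabs_pos n11). pose proof (Rabs_pos n12).
    pose proof (Rabs_pos n21). pose proof (Rabs_pos n22).
    assert (Rabs n11 * Rabs (y - y0) <= Rabs n11 * rho) by (apply Rmult_le_compat_l; lra).
    assert (Rabs n12 * Rabs (z - z0) <= Rabs n12 * rho) by (apply Rmult_le_compat_l; lra).
    assert ((Rabs n11 + Rabs n12) * rho <= K * rho) by (apply Rmult_le_compat_r; [pose proof rho_pos; lra| unfold K; lra]).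
    lra.
  - replace (n21 * y + n22 * z - (f2 t0 + g2 t0)) with (n21 * (y - y0) + n22 * (z - z0))
      by (unfold f2, g2, y0, z0; ring).
    eapply Rle_trans. apply lin_bound.
    pose proof (Rabs_pos n11). pose proof (Rabs_pos n12).
    pose proof (Rabs_pos n21). pose proof (Rabs_pos n22).
    assert (Rabs n21 * Rabs (y - y0) <= Rabs n21 * rho) by (apply Rmult_le_compat_l; lra).
    assert (Rabs n22 * Rabs (z - z0) <= Rabs n22 * rho) by (apply Rmult_le_compat_l; lra).
    assert ((Rabs n21 + Rabs n22) * rho <= K * rho) by (apply Rmult_le_compat_r; [pose proof rho_pos; lra| unfold K; lra]).
    lra.
  - exists (u, w). unfold Gprop; simpl. split; auto. split; auto.
    destruct (cramer_solve n11 n21 n12 n22 (A1 u + B1 w - y) (A2 u + B2 w - z) 0 0 detN_nz) as [S1 S2].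
    + unfold f1, g1 in E1. lra.
    + unfold f2, g2 in E2. lra.
    + unfold crx, cry in S1, S2.
      assert (A1 u + B1 w - y = 0) by (rewrite S1; unfold Rdiv; ring).
      assert (A2 u + B2 w - z = 0) by (rewrite S2; unfold Rdiv; ring).
      split; lra.
Qed.

Lemma inj u w u' w' : Rabs (u - t0) <= rr -> Rabs (w - t0) <= rr ->
   Rabs (u' - t0) <= rr -> Rabs (w' - t0) <= rr ->
   Rabs (u - u') + Rabs (w - w') <=
   4/3 * K * (Rabs ((A1 u + B1 w) - (A1 u' + B1 w')) + Rabs ((A2 u + B2 w) - (A2 u' + B2 w'))).
Proof.
  intros h1 h2 h3 h4. eapply Rle_trans. apply (bnd_inj t0 rr f1 f2 g1 g2 bnd); auto.
  set (X := (A1 u + B1 w) - (A1 u' + B1 w')). set (Y := (A2 u + B2 w) - (A2 u' + B2 w')).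
  replace (f1 u + g1 w - (f1 u' + g1 w')) with (n11 * X + n12 * Y) by (unfold X, Y, f1, g1; ring).
  replace (f2 u + g2 w - (f2 u' + g2 w')) with (n21 * X + n22 * Y) by (unfold X, Y, f2, g2; ring).
  pose proof (lin_bound n11 n12 X Y). pose proof (lin_bound n21 n22 X Y).
  pose proof (Rabs_pos X). pose proof (Rabs_pos Y).
  pose proof (Rabs_pos n11). pose proof (Rabs_pos n12).
  pose proof (Rabs_pos n21). pose proof (Rabs_pos n22).
  unfold K. nra.
Qed.

Lemma Glip y z y' z' : Dom y z -> Dom y' z' ->
  Rabs (G1 y z - G1 y' z') + Rabs (G2 y z - G2 y' z') <= 4/3 * K * (Rabs (y - y') + Rabs (z - z')).
Proof.
  intros H H'. destruct (Gspec y z H) as [h1 [h2 [e1 e2]]]. destruct (Gspec y' z' H') as [h3 [h4 [e3 e4]]].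
  eapply Rle_trans. apply inj; eauto. rewrite e1, e2, e3, e4. lra.
Qed.

Lemma Dom_near y z : Dom y z -> exists d, 0 < d /\ forall y' z', Rabs (y' - y) < d -> Rabs (z' - z) < d -> Dom y' z'.
Proof.
  intros [Hy Hz]. exists (Rmin (rho - Rabs (y - y0)) (rho - Rabs (z - z0))).
  split. apply Rmin_pos; lra.
  intros y' z' H1 H2. pose proof (Rmin_l (rho - Rabs (y - y0)) (rho - Rabs (z - z0))).
  pose proof (Rmin_r (rho - Rabs (y - y0)) (rho - Rabs (z - z0))).
  split.
  - replace (y' - y0) with ((y' - y) + (y - y0)) by ring. eapply Rle_lt_trans. apply Rabs_triang. lra.
  - replace (z' - z0) with ((z' - z) + (z - z0)) by ring. eapply Rle_lt_trans. apply Rabs_triang. lra.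
Qed.

Lemma Dom_open : open2 Dom.
Proof.
  intros y z H. destruct (Dom_near y z H) as [d [Hd Hd']]. exists d. split; auto.
Qed.

Lemma Gcont y z : Dom y z ->
  continuous (fun p : R * R => G1 (fst p) (snd p)) (y, z) /\
  continuous (fun p : R * R => G2 (fst p) (snd p)) (y, z).
Proof.
  intros H. destruct (Dom_near y z H) as [d [Hd Hd']].
  pose proof K_pos.
  split; apply eps_cont2; intros e He; simpl;
  exists (Rmin d (e / (3 * K))); split; try (apply Rmin_pos; auto; apply Rdiv_lt_0_compat; lra);
  intros y' z' H1 H2;
  pose proof (Rmin_l d (e / (3 * K))); pose proof (Rmin_r d (e / (3 * K)));
  pose proof (Glip y' z' y z (Hd' y' z' ltac:(lra) ltac:(lra)) H);
  pose proof (Rabs_pos (G1 y' z' - G1 y z)); pose proof (Rabs_pos (G2 y' z' - G2 y z));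
  assert (4/3 * K * (Rabs (y' - y) + Rabs (z' - z)) < e) by
    (apply Rle_lt_trans with (4/3 * K * (2 * (e / (3 * K)))); [apply Rmult_le_compat_l; lra|];
     replace (4/3 * K * (2 * (e / (3 * K)))) with (8/9 * e) by (field; lra); lra);
  lra.
Qed.

Lemma Gderiv y z : Dom y z ->
  let u := G1 y z in let w := G2 y z in
  is_derive (fun s => G1 s z) y (b2 w / Dl u w) /\
  is_derive (fun s => G2 s z) y (- a2 u / Dl u w) /\
  is_derive (fun s => G1 y s) z (- b1 w / Dl u w) /\
  is_derive (fun s => G2 y s) z (a1 u / Dl u w).
Proof.
  intros H u w.
  destruct (Gspec y z H) as [Hu [Hw [E1 E2]]]. fold u w in Hu, Hw, E1, E2.
  destruct (Dom_near y z H) as [d [Hd Hd']].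
  pose proof K_pos. pose proof detN_nz as HN.
  assert (HDl : Dl u w <> 0) by (apply Dl_nz; pose proof rr_pos; lra).
  assert (Hder : forall x, t0 - rr <= x <= t0 + rr ->
     is_derive f1 x (df1 x) /\ is_derive f2 x (df2 x) /\ is_derive g1 x (dg1 x) /\ is_derive g2 x (dg2 x)).
  { intros x Hx. apply deriv_all. apply box_R0. apply Rabs_le_iff. lra. }
  assert (Hdet : forall a b c e, t0 - rr <= a <= t0 + rr -> t0 - rr <= b <= t0 + rr ->
     t0 - rr <= c <= t0 + rr -> t0 - rr <= e <= t0 + rr -> df1 a * dg2 e - dg1 c * df2 b <> 0).
  { intros a b c e Ha Hb Hc He. pose proof (det_pos a b c e).
    assert (3/4 <= df1 a * dg2 e - dg1 c * df2 b); [apply Rge_le, H1; apply Rabs_le_iff; lra | lra]. }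
  destruct (cont_all u (box_R0 u Hu)) as [C1 [C2 _]].
  destruct (cont_all w (box_R0 w Hw)) as [_ [_ [C3 C4]]].
  assert (Ey : forall s, Rabs (s - y) < d ->
     t0 - rr <= G1 s z <= t0 + rr /\ t0 - rr <= G2 s z <= t0 + rr /\
     f1 (G1 s z) + g1 (G2 s z) = f1 (G1 y z) + g1 (G2 y z) + (s - y) * n11 /\
     f2 (G1 s z) + g2 (G2 s z) = f2 (G1 y z) + g2 (G2 y z) + (s - y) * n21 /\
     Rabs (G1 s z - G1 y z) + Rabs (G2 s z - G2 y z) <= (4/3 * K) * Rabs (s - y)).
  { intros s Hs. assert (Hsz : Dom s z) by (apply Hd'; auto; rewrite Rminus_eq_0, Rabs_R0; lra).
    destruct (Gspec s z Hsz) as [Hu' [Hw' [E1' E2']]].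
    split; [apply Rabs_le_iff in Hu'; lra|]. split; [apply Rabs_le_iff in Hw'; lra|].
    split; [unfold f1, g1; fold u w; nra|]. split; [unfold f2, g2; fold u w; nra|].
    pose proof (Glip s z y z Hsz H). replace (z - z) with 0 in H1 by ring. rewrite Rabs_R0 in H1. lra. }
  assert (Ez : forall s, Rabs (s - z) < d ->
     t0 - rr <= G1 y s <= t0 + rr /\ t0 - rr <= G2 y s <= t0 + rr /\
     f1 (G1 y s) + g1 (G2 y s) = f1 (G1 y z) + g1 (G2 y z) + (s - z) * n12 /\
     f2 (G1 y s) + g2 (G2 y s) = f2 (G1 y z) + g2 (G2 y z) + (s - z) * n22 /\
     Rabs (G1 y s - G1 y z) + Rabs (G2 y s - G2 y z) <= (4/3 * K) * Rabs (s - z)).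
  { intros s Hs. assert (Hsz : Dom y s) by (apply Hd'; auto; rewrite Rminus_eq_0, Rabs_R0; lra).
    destruct (Gspec y s Hsz) as [Hu' [Hw' [E1' E2']]].
    split; [apply Rabs_le_iff in Hu'; lra|]. split; [apply Rabs_le_iff in Hw'; lra|].
    split; [unfold f1, g1; fold u w; nra|]. split; [unfold f2, g2; fold u w; nra|].
    pose proof (Glip y s y z Hsz H). replace (y - y) with 0 in H1 by ring. rewrite Rabs_R0 in H1. lra. }
  destruct (dir_deriv f1 f2 g1 g2 df1 df2 dg1 dg2 (t0 - rr) (t0 + rr) (fun s => G1 s z) (fun s => G2 s z)
     y n11 n21 (4/3 * K) d Hder C1 C2 C3 C4 Hdet Hd Ey) as [Dy1 Dy2].
  destruct (dir_deriv f1 f2 g1 g2 df1 df2 dg1 dg2 (t0 - rr) (t0 + rr) (fun s => G1 y s) (fun s => G2 y s)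
     z n12 n22 (4/3 * K) d Hder C1 C2 C3 C4 Hdet Hd Ez) as [Dz1 Dz2].
  fold u w in Dy1, Dy2, Dz1, Dz2.
  assert (R : df1 u * dg2 w - dg1 w * df2 u = (n11 * n22 - n12 * n21) * Dl u w) by apply Dl_rel.
  unfold crx, cry in *. rewrite R in Dy1, Dy2, Dz1, Dz2.
  split; [|split; [|split]].
  - eapply is_derive_val; [exact Dy1|]. unfold dg1, dg2. field. auto.
  - eapply is_derive_val; [exact Dy2|]. unfold df1, df2. field. auto.
  - eapply is_derive_val; [exact Dz1|]. unfold dg1, dg2. field. auto.
  - eapply is_derive_val; [exact Dz2|]. unfold df1, df2. field. auto.
Qed.

Lemma near_locally (P : R -> R -> Prop) y z : (exists d, 0 < d /\ forall y' z', Rabs (y' - y) < d -> Rabs (z' - z) < d -> P y' z') ->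
  locally (y, z) (fun p : R * R => P (fst p) (snd p)).
Proof.
  intros [d [Hd H]]. exists (mkposreal d Hd). intros [y' z'] [H1 H2]. apply H; auto.
Qed.

Lemma near_locally1 (P : R -> Prop) y : (exists d, 0 < d /\ forall y', Rabs (y' - y) < d -> P y') ->
  locally y P.
Proof.
  intros [d [Hd H]]. exists (mkposreal d Hd). intros y' H1. apply H; auto.
Qed.

Let g11 u w := b2 w / Dl u w.
Let g21 u w := - a2 u / Dl u w.
Let g12 u w := - b1 w / Dl u w.
Let g22 u w := a1 u / Dl u w.

Definition PartOK (Phi Phiu Phiw : R -> R -> R) :=
  (forall u w, Rabs (u - t0) < 2 * rr -> Rabs (w - t0) < 2 * rr ->
     is_derive (fun x => Phi x w) u (Phiu u w) /\ is_derive (fun x => Phi u x) w (Phiw u w)) /\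
  (forall u w, Rabs (u - t0) <= rr -> Rabs (w - t0) <= rr ->
     continuous (fun p : R * R => Phi (fst p) (snd p)) (u, w) /\
     continuous (fun p : R * R => Phiu (fst p) (snd p)) (u, w) /\
     continuous (fun p : R * R => Phiw (fst p) (snd p)) (u, w)).

Lemma chainG Phi Phiu Phiw : PartOK Phi Phiu Phiw -> forall y z, Dom y z ->
  let u := G1 y z in let w := G2 y z in
  is_derive (fun s => Phi (G1 s z) (G2 s z)) y (Phiu u w * g11 u w + Phiw u w * g21 u w) /\
  is_derive (fun s => Phi (G1 y s) (G2 y s)) z (Phiu u w * g12 u w + Phiw u w * g22 u w).
Proof.
  intros [HP HC] y z H u w.
  destruct (Gspec y z H) as [Hu [Hw _]]. fold u w in Hu, Hw.
  destruct (Gderiv y z H) as [D1 [D2 [D3 D4]]]. fold u w in D1, D2, D3, D4.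
  pose proof rr_pos.
  assert (Hn : exists d, 0 < d /\ forall u' w', Rabs (u' - u) < d -> Rabs (w' - w) < d ->
      is_derive (fun x => Phi x w') u' (Phiu u' w')).
  { exists rr. split; auto. intros u' w' H1 H2. apply HP.
    - replace (u' - t0) with ((u' - u) + (u - t0)) by ring. eapply Rle_lt_trans. apply Rabs_triang. lra.
    - replace (w' - t0) with ((w' - w) + (w - t0)) by ring. eapply Rle_lt_trans. apply Rabs_triang. lra. }
  destruct (HP u w ltac:(lra) ltac:(lra)) as [_ Pw].
  destruct (HC u w Hu Hw) as [_ [Cu _]].
  split.
  - apply (chain2 Phi Phiu (fun s => G1 s z) (fun s => G2 s z) y); auto.
  - apply (chain2 Phi Phiu (fun s => G1 y s) (fun s => G2 y s) z); auto.
Qed.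

Definition Hy (Phiu Phiw : R -> R -> R) u w := Phiu u w * g11 u w + Phiw u w * g21 u w.
Definition Hz (Phiu Phiw : R -> R -> R) u w := Phiu u w * g12 u w + Phiw u w * g22 u w.

Lemma cont_a u w : Rabs (u - t0) <= 2 * rr -> Rabs (w - t0) <= 2 * rr ->
  continuous (fun p : R * R => a1 (fst p)) (u, w) /\ continuous (fun p : R * R => a2 (fst p)) (u, w) /\
  continuous (fun p : R * R => ax (fst p)) (u, w) /\
  continuous (fun p : R * R => b1 (snd p)) (u, w) /\ continuous (fun p : R * R => b2 (snd p)) (u, w) /\
  continuous (fun p : R * R => bx (snd p)) (u, w).
Proof.
  intros Hu Hw. apply box2_R0 in Hu. apply box2_R0 in Hw.
  repeat split; (apply catom1 || apply catom2); simpl;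
  (eapply c2_cd; [eassumption|auto]).
Qed.

Lemma cont_g u w : Rabs (u - t0) <= 2 * rr -> Rabs (w - t0) <= 2 * rr ->
  continuous (fun p : R * R => g11 (fst p) (snd p)) (u, w) /\
  continuous (fun p : R * R => g21 (fst p) (snd p)) (u, w) /\
  continuous (fun p : R * R => g12 (fst p) (snd p)) (u, w) /\
  continuous (fun p : R * R => g22 (fst p) (snd p)) (u, w).
Proof.
  intros Hu Hw. destruct (cont_a u w Hu Hw) as [C1 [C2 [_ [C4 [C5 _]]]]].
  assert (HD : continuous (fun p : R * R => Dl (fst p) (snd p)) (u, w)).
  { unfold Dl. apply cminus; apply cmul; auto. }
  assert (HD0 : Dl u w <> 0) by (apply Dl_nz; auto).
  unfold g11, g21, g12, g22.
  repeat split; apply cdiv; auto; apply copp; auto.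
Qed.

Lemma C1G Phi Phiu Phiw (f : R -> R -> R) : PartOK Phi Phiu Phiw ->
  (forall y z, Dom y z -> f y z = Phi (G1 y z) (G2 y z)) ->
  C1_on Dom f /\ (forall y z, Dom y z ->
     pu f y z = Hy Phiu Phiw (G1 y z) (G2 y z) /\ pv f y z = Hz Phiu Phiw (G1 y z) (G2 y z)).
Proof.
  intros HP Hf.
  assert (E : forall y z, Dom y z ->
     is_derive (fun s => f s z) y (Hy Phiu Phiw (G1 y z) (G2 y z)) /\
     is_derive (fun s => f y s) z (Hz Phiu Phiw (G1 y z) (G2 y z))).
  { intros y z H. destruct (chainG Phi Phiu Phiw HP y z H) as [D1 D2].
    destruct (Dom_near y z H) as [d [Hd Hd']].
    split.
    - apply (is_derive_ext_loc (fun s => Phi (G1 s z) (G2 s z))); [|exact D1].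
      apply near_locally1. exists d. split; auto. intros y' Hy'. symmetry. apply Hf. apply Hd'; auto.
      rewrite Rminus_eq_0, Rabs_R0; auto.
    - apply (is_derive_ext_loc (fun s => Phi (G1 y s) (G2 y s))); [|exact D2].
      apply near_locally1. exists d. split; auto. intros z' Hz'. symmetry. apply Hf. apply Hd'; auto.
      rewrite Rminus_eq_0, Rabs_R0; auto. }
  assert (E2 : forall y z, Dom y z ->
     pu f y z = Hy Phiu Phiw (G1 y z) (G2 y z) /\ pv f y z = Hz Phiu Phiw (G1 y z) (G2 y z)).
  { intros y z H. destruct (E y z H) as [D1 D2]. unfold pu, pv. split; apply is_derive_unique; auto. }
  split; auto.
  intros y z H. destruct (E y z H) as [D1 D2].
  destruct (Dom_near y z H) as [d [Hd Hd']].
  destruct (Gspec y z H) as [Hu [Hw _]].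
  destruct (Gcont y z H) as [CG1 CG2].
  destruct HP as [_ HC]. destruct (HC _ _ Hu Hw) as [_ [Cu Cw]].
  pose proof rr_pos.
  destruct (cont_g (G1 y z) (G2 y z) ltac:(lra) ltac:(lra)) as [K11 [K21 [K12 K22]]].
  split; [eexists; eauto|]. split; [eexists; eauto|]. split.
  - apply (continuous_ext_loc _ (fun p : R * R => Hy Phiu Phiw (G1 (fst p) (snd p)) (G2 (fst p) (snd p)))).
    + apply (near_locally (fun y' z' => Hy Phiu Phiw (G1 y' z') (G2 y' z') = pu f y' z')).
      exists d. split; auto. intros y' z' h1 h2. symmetry. apply E2. apply Hd'; auto.
    + apply (continuous_comp_2 (fun p : R * R => G1 (fst p) (snd p)) (fun p : R * R => G2 (fst p) (snd p))
          (Hy Phiu Phiw)); auto.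
      unfold Hy. apply cplus; apply cmul; auto.
  - apply (continuous_ext_loc _ (fun p : R * R => Hz Phiu Phiw (G1 (fst p) (snd p)) (G2 (fst p) (snd p)))).
    + apply (near_locally (fun y' z' => Hz Phiu Phiw (G1 y' z') (G2 y' z') = pv f y' z')).
      exists d. split; auto. intros y' z' h1 h2. symmetry. apply E2. apply Hd'; auto.
    + apply (continuous_comp_2 (fun p : R * R => G1 (fst p) (snd p)) (fun p : R * R => G2 (fst p) (snd p))
          (Hz Phiu Phiw)); auto.
      unfold Hz. apply cplus; apply cmul; auto.
Qed.

Let ad1 := Derive a1. Let ad2 := Derive a2. Let adx := Derive ax.
Let bd1 := Derive b1. Let bd2 := Derive b2. Let bdx := Derive bx.
Let Dlu u w := ad1 u * b2 w - b1 w * ad2 u.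
Let Dlw u w := a1 u * bd2 w - bd1 w * a2 u.

Definition Psi u w := Ax u + Bx w.
Definition Psiu (u w : R) := ax u.
Definition Psiw (u w : R) := bx w.
Definition Phi1 := Hy Psiu Psiw.
Definition Phi2 := Hz Psiu Psiw.
Definition Phi1u u w := adx u * (b2 w / Dl u w) + ax u * (- b2 w * Dlu u w / (Dl u w * Dl u w))
   + bx w * ((- ad2 u * Dl u w + a2 u * Dlu u w) / (Dl u w * Dl u w)).
Definition Phi1w u w := ax u * ((bd2 w * Dl u w - b2 w * Dlw u w) / (Dl u w * Dl u w))
   + bdx w * (- a2 u / Dl u w) + bx w * (a2 u * Dlw u w / (Dl u w * Dl u w)).
Definition Phi2u u w := adx u * (- b1 w / Dl u w) + ax u * (b1 w * Dlu u w / (Dl u w * Dl u w))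
   + bx w * ((ad1 u * Dl u w - a1 u * Dlu u w) / (Dl u w * Dl u w)).
Definition Phi2w u w := ax u * ((- bd1 w * Dl u w + b1 w * Dlw u w) / (Dl u w * Dl u w))
   + bdx w * (a1 u / Dl u w) + bx w * (- a1 u * Dlw u w / (Dl u w * Dl u w)).

Lemma cDl u w : Rabs (u - t0) <= 2 * rr -> Rabs (w - t0) <= 2 * rr ->
  continuous (fun p : R * R => Dl (fst p) (snd p)) (u, w).
Proof.
  intros Hu Hw. destruct (cont_a u w Hu Hw) as [C1 [C2 [_ [C4 [C5 _]]]]].
  unfold Dl. apply cminus; apply cmul; auto.
Qed.

Ltac atomc := simpl; unfold adx, ad1, ad2, bdx, bd1, bd2, ax, a1, a2, bx, b1, b2;
  match goal with
  | |- continuous (Derive (Derive ?f)) ?x => apply (c2_cdd f t0 R0 x); [assumption | apply box2_R0; lra]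
  | |- continuous (Derive ?f) ?x => apply (c2_cd f t0 R0 x); [assumption | apply box2_R0; lra]
  | |- continuous ?f ?x => apply (c2_c f t0 R0 x); [assumption | apply box2_R0; lra]
  end.

Ltac ctac1 := match goal with
  | |- continuous (fun p : R * R => Dl (fst p) (snd p)) _ => apply cDl; lra
  | |- continuous (fun p : R * R => ?h (fst p)) _ => apply (catom1 h)
  | |- continuous (fun p : R * R => ?h (snd p)) _ => apply (catom2 h)
  | |- continuous (fun p : R * R => @?f p + @?g p) _ => apply (cplus f g)
  | |- continuous (fun p : R * R => @?f p - @?g p) _ => apply (cminus f g)
  | |- continuous (fun p : R * R => @?f p * @?g p) _ => apply (cmul f g)
  | |- continuous (fun p : R * R => @?f p / @?g p) _ => apply (cdiv f g)
  | |- continuous (fun p : R * R => - @?f p) _ => apply (copp f)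
  | |- continuous (fun p : R * R => ?c) _ => apply cconst
  end.
Ltac ctac := repeat ctac1.

Ltac nzDl := simpl; first [ apply Rmult_integral_contrapositive_currified; apply Dl_nz; lra
                          | apply Dl_nz; lra ].

Ltac exd := match goal with |- ex_derive (fun x => ?g x) ?y => change (ex_derive g y) end;
  unfold adx, ad1, ad2, bdx, bd1, bd2, ax, a1, a2, bx, b1, b2;
  first [ apply (c2_exd _ t0 R0); assumption | apply (c2_ex _ t0 R0); assumption ].

Lemma part_Psi : PartOK Psi Psiu Psiw.
Proof.
  split.
  - intros u w Hu Hw. pose proof rr_pos.
    assert (Hu' : Rabs (u - t0) < R0) by (apply box2_R0; lra).
    assert (Hw' : Rabs (w - t0) < R0) by (apply box2_R0; lra).
    unfold Psi, Psiu, Psiw. split.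
    + auto_derive. apply (CAx u Hu'). unfold ax. etafix. ring.
    + auto_derive. apply (CBx w Hw'). unfold bx. etafix. ring.
  - intros u w Hu Hw. pose proof rr_pos. unfold Psi, Psiu, Psiw.
    split; [|split]; ctac; atomc.
Qed.

Lemma Dl_box u w : Rabs (u - t0) < 2 * rr -> Rabs (w - t0) < 2 * rr -> Dl u w <> 0.
Proof. intros; apply Dl_nz; lra. Qed.

Lemma part_Phi1 : PartOK Phi1 Phi1u Phi1w.
Proof.
  split.
  - intros u w Hu Hw. pose proof rr_pos.
    assert (Hu' : Rabs (u - t0) < R0) by (apply box2_R0; lra).
    assert (Hw' : Rabs (w - t0) < R0) by (apply box2_R0; lra).
    pose proof (Dl_box u w Hu Hw) as HD.
    unfold Phi1, Hy, Psiu, Psiw, g11, g21, Phi1u, Phi1w, Dlu, Dlw. unfold Dl in *. split.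
    + auto_derive.
      * repeat split; try exact HD; exd.
      * unfold ad1, ad2, adx, ax, a1, a2, bx, b1, b2. etafix. Time field. auto.
    + auto_derive.
      * repeat split; try exact HD; exd.
      * unfold bd1, bd2, bdx, bx, b1, b2, ax, a1, a2. etafix. Time field. auto.
  - intros u w Hu Hw. pose proof rr_pos. unfold Phi1, Hy, Psiu, Psiw, g11, g21, Phi1u, Phi1w, Dlu, Dlw.
    repeat split; ctac; try atomc; nzDl.
Qed.


Lemma part_Phi2 : PartOK Phi2 Phi2u Phi2w.
Proof.
  split.
  - intros u w Hu Hw. pose proof rr_pos.
    assert (Hu' : Rabs (u - t0) < R0) by (apply box2_R0; lra).
    assert (Hw' : Rabs (w - t0) < R0) by (apply box2_R0; lra).
    pose proof (Dl_box u w Hu Hw) as HD.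
    unfold Phi2, Hz, Psiu, Psiw, g12, g22, Phi2u, Phi2w, Dlu, Dlw. unfold Dl in *. split.
    + auto_derive.
      * repeat split; try exact HD; exd.
      * unfold ad1, ad2, adx, ax, a1, a2, bx, b1, b2. etafix. field. auto.
    + auto_derive.
      * repeat split; try exact HD; exd.
      * unfold bd1, bd2, bdx, bx, b1, b2, ax, a1, a2. etafix. field. auto.
  - intros u w Hu Hw. pose proof rr_pos. unfold Phi2, Hz, Psiu, Psiw, g12, g22, Phi2u, Phi2w, Dlu, Dlw.
    repeat split; ctac; try atomc; nzDl.
Qed.

Definition psi y z := Ax (G1 y z) + Bx (G2 y z).

Lemma psi_C1 : C1_on Dom psi /\ (forall y z, Dom y z ->
   pu psi y z = Phi1 (G1 y z) (G2 y z) /\ pv psi y z = Phi2 (G1 y z) (G2 y z)).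
Proof.
  apply (C1G Psi Psiu Psiw psi part_Psi). intros; reflexivity.
Qed.

Lemma pupsi_C1 : C1_on Dom (pu psi) /\ (forall y z, Dom y z ->
   pu (pu psi) y z = Hy Phi1u Phi1w (G1 y z) (G2 y z) /\ pv (pu psi) y z = Hz Phi1u Phi1w (G1 y z) (G2 y z)).
Proof.
  apply (C1G Phi1 Phi1u Phi1w (pu psi) part_Phi1). intros y z H. apply psi_C1; auto.
Qed.

Lemma pvpsi_C1 : C1_on Dom (pv psi) /\ (forall y z, Dom y z ->
   pu (pv psi) y z = Hy Phi2u Phi2w (G1 y z) (G2 y z) /\ pv (pv psi) y z = Hz Phi2u Phi2w (G1 y z) (G2 y z)).
Proof.
  apply (C1G Phi2 Phi2u Phi2w (pv psi) part_Phi2). intros y z H. apply psi_C1; auto.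
Qed.

Lemma psi_BI : BI_soliton Dom psi.
Proof.
  split; [apply Dom_open|]. split; [split; [apply psi_C1 | split; [apply pupsi_C1 | apply pvpsi_C1]]|].
  intros y z H.
  destruct (proj2 psi_C1 y z H) as [E1 E2].
  destruct (proj2 pupsi_C1 y z H) as [E3 E4].
  destruct (proj2 pvpsi_C1 y z H) as [_ E6].
  rewrite E1, E2, E3, E4, E6.
  destruct (Gspec y z H) as [Hu [Hw _]].
  set (u := G1 y z) in *. set (w := G2 y z) in *.
  pose proof rr_pos.
  assert (HD : Dl u w <> 0) by (apply Dl_nz; lra).
  pose proof (nullA u (box_R0 u Hu)) as NA. pose proof (nullB w (box_R0 w Hw)) as NB.
  unfold Hy, Hz, g11, g21, g12, g22.
  unfold Dl in HD.
  apply (bi_alg (a1 u) (a2 u) (ax u) (b1 w) (b2 w) (bx w)); auto.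
  - unfold Phi1, Phi2, Hy, Hz, Psiu, Psiw, g11, g21, g12, g22, Dl. field. auto.
  - unfold Phi1, Phi2, Hy, Hz, Psiu, Psiw, g11, g21, g12, g22, Dl. field. auto.
  - unfold Phi1w, Phi2w, Dlw, Dl. field. auto.
  - unfold Phi1u, Phi2u, Dlu, Dl. field. auto.
Qed.

Lemma chart_main : exists r, 0 < r /\
  (forall u w, Rabs (u - t0) < r -> Rabs (w - t0) < r -> Derive A1 u * Derive B2 w - Derive B1 w * Derive A2 u <> 0) /\
  exists (D : R -> R -> Prop) (ps : R -> R -> R), BI_soliton D ps /\
   forall u w, Rabs (u - t0) < r -> Rabs (w - t0) < r ->
     D (A1 u + B1 w) (A2 u + B2 w) /\ Ax u + Bx w = ps (A1 u + B1 w) (A2 u + B2 w).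
Proof.
  pose proof rr_pos. pose proof rho_pos.
  assert (Ht : Rabs (t0 - t0) < R0) by (rewrite Rminus_eq_0, Rabs_R0; lra).
  assert (Hr2 : 0 < rho / 2) by lra.
  destruct (cont_eps _ _ (c2_c _ _ _ _ CA1 Ht) _ Hr2) as [d1 [Hd1 H1]].
  destruct (cont_eps _ _ (c2_c _ _ _ _ CA2 Ht) _ Hr2) as [d2 [Hd2 H2]].
  destruct (cont_eps _ _ (c2_c _ _ _ _ CB1 Ht) _ Hr2) as [d3 [Hd3 H3]].
  destruct (cont_eps _ _ (c2_c _ _ _ _ CB2 Ht) _ Hr2) as [d4 [Hd4 H4]].
  set (m := Rmin (Rmin d1 d2) (Rmin (Rmin d3 d4) rr)).
  assert (m1 : m <= d1) by (unfold m; pose proof (Rmin_l (Rmin d1 d2) (Rmin (Rmin d3 d4) rr)); pose proof (Rmin_l d1 d2); lra).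
  assert (m2 : m <= d2) by (unfold m; pose proof (Rmin_l (Rmin d1 d2) (Rmin (Rmin d3 d4) rr)); pose proof (Rmin_r d1 d2); lra).
  assert (m3 : m <= d3) by (unfold m; pose proof (Rmin_r (Rmin d1 d2) (Rmin (Rmin d3 d4) rr)); pose proof (Rmin_l (Rmin d3 d4) rr); pose proof (Rmin_l d3 d4); lra).
  assert (m4 : m <= d4) by (unfold m; pose proof (Rmin_r (Rmin d1 d2) (Rmin (Rmin d3 d4) rr)); pose proof (Rmin_l (Rmin d3 d4) rr); pose proof (Rmin_r d3 d4); lra).
  assert (m5 : m <= rr) by (unfold m; pose proof (Rmin_r (Rmin d1 d2) (Rmin (Rmin d3 d4) rr)); pose proof (Rmin_r (Rmin d3 d4) rr); lra).
  assert (mp : 0 < m) by (unfold m; repeat apply Rmin_pos; auto).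
  exists m. split; auto. split.
  { intros u w Hu Hw. apply (Dl_nz u w); lra. }
  exists Dom, psi. split; [apply psi_BI|].
  intros u w Hu Hw.
  assert (HD : Dom (A1 u + B1 w) (A2 u + B2 w)).
  { specialize (H1 u ltac:(lra)). specialize (H2 u ltac:(lra)).
    specialize (H3 w ltac:(lra)). specialize (H4 w ltac:(lra)).
    split.
    - replace (A1 u + B1 w - y0) with ((A1 u - A1 t0) + (B1 w - B1 t0)) by (unfold y0; ring).
      eapply Rle_lt_trans. apply Rabs_triang. lra.
    - replace (A2 u + B2 w - z0) with ((A2 u - A2 t0) + (B2 w - B2 t0)) by (unfold z0; ring).
      eapply Rle_lt_trans. apply Rabs_triang. lra. }
  split; auto.
  destruct (Gspec _ _ HD) as [Hu' [Hw' [E1 E2]]].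
  pose proof (inj (G1 (A1 u + B1 w) (A2 u + B2 w)) (G2 (A1 u + B1 w) (A2 u + B2 w)) u w Hu' Hw' ltac:(lra) ltac:(lra)) as I.
  rewrite E1, E2 in I. rewrite !Rminus_eq_0, Rabs_R0 in I.
  pose proof (Rabs_pos (G1 (A1 u + B1 w) (A2 u + B2 w) - u)).
  pose proof (Rabs_pos (G2 (A1 u + B1 w) (A2 u + B2 w) - w)).
  assert (Z1 : Rabs (G1 (A1 u + B1 w) (A2 u + B2 w) - u) = 0) by lra.
  assert (Z2 : Rabs (G2 (A1 u + B1 w) (A2 u + B2 w) - w) = 0) by lra.
  apply Rabs_eq_0 in Z1. apply Rabs_eq_0 in Z2.
  unfold psi. replace (G1 (A1 u + B1 w) (A2 u + B2 w)) with u by lra.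
  replace (G2 (A1 u + B1 w) (A2 u + B2 w)) with w by lra. reflexivity.
Qed.

End Chart.


Lemma lim0_bounded (u : nat -> R) : is_lim_seq u 0 -> exists M, forall n, Rabs (u n) <= M.
Proof.
  intros H. assert (H1 := proj2 (is_lim_seq_spec u 0) H (mkposreal 1 Rlt_0_1)).
  destruct H1 as [N HN]. simpl in HN.
  exists (1 + sum_f_R0 (fun k => Rabs (u k)) N). intros n.
  assert (Hs : forall m, 0 <= sum_f_R0 (fun k => Rabs (u k)) m).
  { intro m. apply cond_pos_sum. intro; apply Rabs_pos. }
  destruct (le_lt_dec N n) as [Hn|Hn].
  - specialize (HN n Hn). rewrite Rminus_0_r in HN. pose proof (Hs N). lra.
  - assert (forall m, (n <= m)%nat -> Rabs (u n) <= sum_f_R0 (fun k => Rabs (u k)) m).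
    { induction m; intros Hm.
      - inversion Hm. simpl. lra.
      - inversion Hm. 
        + subst. simpl. pose proof (Hs m). lra.
        + simpl. specialize (IHm H1). pose proof (Rabs_pos (u (S m))). lra. }
    specialize (H0 N ltac:(lia)). lra.
Qed.

Lemma radius_ge (c : nat -> R) r : (forall x, Rabs x < r -> exists l, is_pseries c x l) ->
  forall x, Rabs x < r -> Rbar_lt (Rabs x) (CV_radius c).
Proof.
  intros H x Hx.
  set (s := (Rabs x + r) / 2).
  assert (Hs : Rabs s < r) by (unfold s; pose proof (Rabs_pos x); rewrite Rabs_right; lra).
  destruct (H s Hs) as [l Hl].
  assert (Hb : exists M, forall n, Rabs (c n * s ^ n) <= M).
  { assert (E : ex_series (fun k => scal (pow_n s k) (c k))) by (exists l; exact Hl).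
    apply ex_series_lim_0 in E. destruct (lim0_bounded _ E) as [M HM].
    exists M. intros n. specialize (HM n). rewrite <- pow_n_pow.
    replace (c n * pow_n s n) with (scal (pow_n s n) (c n)); auto.
    unfold scal; simpl; unfold mult; simpl. apply Rmult_comm. }
  destruct (CV_radius_bounded c) as [Hub _].
  specialize (Hub s Hb).
  apply Rbar_lt_le_trans with (Finite s); auto.
  simpl. unfold s. pose proof (Rabs_pos x). lra.
Qed.

Lemma an_local f t0 : analytic_at f t0 -> exists r, 0 < r /\ exists c,
  (forall x, Rabs x < r -> Rbar_lt (Rabs x) (CV_radius c)) /\
  forall t, Rabs (t - t0) < r -> f t = PSeries c (t - t0).
Proof.
  intros [r [Hr [c Hc]]]. exists r. split; auto. exists c.
  assert (Hrad : forall x, Rabs x < r -> Rbar_lt (Rabs x) (CV_radius c)).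
  { apply radius_ge. intros x Hx. exists (f (x + t0)). replace x with (x + t0 - t0) at 1 by ring.
    apply Hc. replace (x + t0 - t0) with x by ring. auto. }
  split; auto.
  intros t Ht. symmetry. apply is_pseries_unique. apply Hc; auto.
Qed.

Lemma is_derive_val2 (f : R -> R) (x l l' : R) : is_derive f x l -> l = l' -> is_derive f x l'.
Proof. intros H E; subst; auto. Qed.

Lemma ps_deriv c t0 r t : (forall x, Rabs x < r -> Rbar_lt (Rabs x) (CV_radius c)) -> Rabs (t - t0) < r ->
  is_derive (fun s => PSeries c (s - t0)) t (PSeries (PS_derive c) (t - t0)).
Proof.
  intros Hc Ht.
  pose proof (is_derive_PSeries c (t - t0) (Hc _ Ht)) as D.
  pose proof (is_derive_comp (PSeries c) (fun s => s - t0) t _ 1 D) as D2.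
  assert (D3 : is_derive (fun s => s - t0) t 1) by (auto_derive; auto; ring).
  specialize (D2 D3). apply (is_derive_val2 _ _ _ _ D2). apply (scal_one (K:=R_AbsRing) (V:=R_NormedModule)).
Qed.

Lemma ball_loc (P : R -> Prop) t0 r t : Rabs (t - t0) < r -> (forall s, Rabs (s - t0) < r -> P s) -> locally t P.
Proof.
  intros Ht H. assert (He : 0 < r - Rabs (t - t0)) by lra.
  exists (mkposreal _ He). intros s Hs. apply H. change (Rabs (s - t) < r - Rabs (t - t0)) in Hs.
  replace (s - t0) with ((s - t) + (t - t0)) by ring. eapply Rle_lt_trans. apply Rabs_triang. lra.
Qed.

Lemma an_smooth f t0 : analytic_at f t0 ->
  ex_derive f t0 /\ ex_derive (Derive f) t0 /\ ex_derive (Derive (Derive f)) t0.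
Proof.
  intros H. destruct (an_local f t0 H) as [r [Hr [c [Hc Hf]]]].
  assert (Hc1 : forall x, Rabs x < r -> Rbar_lt (Rabs x) (CV_radius (PS_derive c))) by (intros; rewrite CV_radius_derive; auto).
  assert (Hc2 : forall x, Rabs x < r -> Rbar_lt (Rabs x) (CV_radius (PS_derive (PS_derive c)))) by (intros; rewrite !CV_radius_derive; auto).
  assert (E0 : forall t, Rabs (t - t0) < r -> Derive f t = PSeries (PS_derive c) (t - t0)).
  { intros t Ht. apply is_derive_unique.
    apply (is_derive_ext_loc (fun s => PSeries c (s - t0))).
    - apply (ball_loc _ t0 r t Ht). intros s Hs. symmetry; auto.
    - apply ps_deriv with r; auto. }
  assert (E1 : forall t, Rabs (t - t0) < r -> Derive (Derive f) t = PSeries (PS_derive (PS_derive c)) (t - t0)).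
  { intros t Ht. apply is_derive_unique.
    apply (is_derive_ext_loc (fun s => PSeries (PS_derive c) (s - t0))).
    - apply (ball_loc _ t0 r t Ht). intros s Hs. symmetry; auto.
    - apply ps_deriv with r; auto. }
  assert (Ht0 : Rabs (t0 - t0) < r) by (rewrite Rminus_eq_0, Rabs_R0; auto).
  split; [|split].
  - exists (PSeries (PS_derive c) (t0 - t0)).
    apply (is_derive_ext_loc (fun s => PSeries c (s - t0))).
    + apply (ball_loc _ t0 r t0 Ht0). intros s Hs. symmetry; auto.
    + apply ps_deriv with r; auto.
  - exists (PSeries (PS_derive (PS_derive c)) (t0 - t0)).
    apply (is_derive_ext_loc (fun s => PSeries (PS_derive c) (s - t0))).
    + apply (ball_loc _ t0 r t0 Ht0). intros s Hs. symmetry; auto.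
    + apply ps_deriv with r; auto.
  - exists (PSeries (PS_derive (PS_derive (PS_derive c))) (t0 - t0)).
    apply (is_derive_ext_loc (fun s => PSeries (PS_derive (PS_derive c)) (s - t0))).
    + apply (ball_loc _ t0 r t0 Ht0). intros s Hs. symmetry; auto.
    + apply ps_deriv with r; auto.
Qed.

Lemma Rabs_lt_iff x b : Rabs x < b <-> -b < x < b.
Proof. unfold Rabs; destruct Rcase_abs; split; intros; lra. Qed.

Lemma lt_open_l (a : Rbar) (t : R) : Rbar_lt a t -> exists e, 0 < e /\ forall s, Rabs (s - t) < e -> Rbar_lt a s.
Proof.
  destruct a as [a| |]; intros H; simpl in *.
  - exists (t - a). split; [lra|]. intros s Hs. apply Rabs_lt_iff in Hs. simpl. lra.
  - contradiction.
  - exists 1. split; [lra|]. auto.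
Qed.

Lemma lt_open_r (b : Rbar) (t : R) : Rbar_lt t b -> exists e, 0 < e /\ forall s, Rabs (s - t) < e -> Rbar_lt s b.
Proof.
  destruct b as [b| |]; intros H; simpl in *.
  - exists (b - t). split; [lra|]. intros s Hs. apply Rabs_lt_iff in Hs. lra.
  - exists 1. split; [lra|]. auto.
  - contradiction.
Qed.

Lemma I_open a b (t : R) : in_interval a b t -> exists e, 0 < e /\ forall s, Rabs (s - t) < e -> in_interval a b s.
Proof.
  intros [Ha Hb]. destruct (lt_open_l a t Ha) as [e1 [He1 H1]]. destruct (lt_open_r b t Hb) as [e2 [He2 H2]].
  exists (Rmin e1 e2). split; [apply Rmin_pos; auto|]. intros s Hs.
  pose proof (Rmin_l e1 e2). pose proof (Rmin_r e1 e2). split; [apply H1|apply H2]; lra.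
Qed.

Lemma I_convex a b (x y z : R) : in_interval a b x -> in_interval a b y -> x <= z <= y -> in_interval a b z.
Proof.
  intros [Hx1 Hx2] [Hy1 Hy2] Hz. split.
  - destruct a as [a| |]; simpl in *; auto; lra.
  - destruct b as [b| |]; simpl in *; auto; lra.
Qed.

Lemma I_seg a b (x y z : R) : in_interval a b x -> in_interval a b y -> Rmin x y <= z <= Rmax x y -> in_interval a b z.
Proof.
  intros Hx Hy Hz. destruct (Rle_dec x y).
  - rewrite Rmin_left, Rmax_right in Hz by lra. apply (I_convex a b x y z); auto.
  - rewrite Rmin_right, Rmax_left in Hz by lra. apply (I_convex a b y x z); auto.
Qed.

Lemma I_ne a b : Rbar_lt a b -> exists t, in_interval a b t.
Proof.
  destruct a as [a| |]; destruct b as [b| |]; intros H; simpl in *; try contradiction.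
  - exists ((a + b) / 2). split; simpl; lra.
  - exists (a + 1). split; simpl; auto; lra.
  - exists (b - 1). split; simpl; auto; lra.
  - exists 0. split; simpl; auto.
Qed.

Lemma loc_I a b (t : R) (P : R -> Prop) : in_interval a b t -> (forall s, in_interval a b s -> P s) -> locally t P.
Proof.
  intros Ht H. destruct (I_open a b t Ht) as [e [He He']].
  exists (mkposreal e He). intros s Hs. apply H. apply He'. exact Hs.
Qed.

Lemma C1_comb (I : R -> Prop) (O : R -> R -> Prop) (A B : R -> R) :
  (forall s t, O s t -> I (s + t) /\ I (s - t)) -> open2 O ->
  (forall u, I u -> is_derive A u (Derive A u) /\ continuous (Derive A) u) ->
  (forall u, I u -> is_derive B u (Derive B u) /\ continuous (Derive B) u) ->
  C1_on O (fun s t => A (s + t) + B (s - t)) /\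
  (forall s t, O s t -> pu (fun s t => A (s + t) + B (s - t)) s t = Derive A (s + t) + Derive B (s - t) /\
                       pv (fun s t => A (s + t) + B (s - t)) s t = Derive A (s + t) - Derive B (s - t)).
Proof.
  intros HO Hop HA HB.
  assert (D : forall s t, O s t ->
     is_derive (fun x => A (x + t) + B (x - t)) s (Derive A (s + t) + Derive B (s - t)) /\
     is_derive (fun x => A (s + x) + B (s - x)) t (Derive A (s + t) - Derive B (s - t))).
  { intros s t H. destruct (HO s t H) as [H1 H2].
    destruct (HA _ H1) as [DA _]. destruct (HB _ H2) as [DB _].
    split.
    - apply (is_derive_plus (fun x => A (x + t)) (fun x => B (x - t))).
      + pose proof (is_derive_comp A (fun x => x + t) s _ 1 DA) as Q.
        eapply is_derive_val2; [apply Q; auto_derive; auto; ring|]. simpl. unfold scal; simpl; unfold mult; simpl; ring.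
      + pose proof (is_derive_comp B (fun x => x - t) s _ 1 DB) as Q.
        eapply is_derive_val2; [apply Q; auto_derive; auto; ring|]. simpl. unfold scal; simpl; unfold mult; simpl; ring.
    - eapply is_derive_val2.
      apply (is_derive_plus (fun x => A (s + x)) (fun x => B (s - x))).
      + pose proof (is_derive_comp A (fun x => s + x) t _ 1 DA) as Q.
        apply Q; auto_derive; auto; ring.
      + pose proof (is_derive_comp B (fun x => s - x) t _ (-1) DB) as Q.
        apply Q; auto_derive; auto; ring.
      + unfold plus, scal; simpl; unfold mult; simpl. ring. }
  assert (E : forall s t, O s t -> pu (fun s t => A (s + t) + B (s - t)) s t = Derive A (s + t) + Derive B (s - t) /\
                       pv (fun s t => A (s + t) + B (s - t)) s t = Derive A (s + t) - Derive B (s - t)).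
  { intros s t H. destruct (D s t H) as [D1 D2]. unfold pu, pv. split; apply is_derive_unique; auto. }
  split; auto.
  intros s t H. destruct (D s t H) as [D1 D2].
  destruct (HO s t H) as [H1 H2]. destruct (HA _ H1) as [_ CA]. destruct (HB _ H2) as [_ CB].
  destruct (Hop s t H) as [e [He He']].
  assert (Hloc : forall f : R -> R -> R, (forall s' t', O s' t' -> f s' t' = f s' t') ->
     True) by auto.
  assert (CAp : continuous (fun p : R * R => Derive A (fst p + snd p)) (s, t)).
  { apply (continuous_comp (fun p : R * R => fst p + snd p) (Derive A)).
    - apply (continuous_plus (fun p : R * R => fst p) (fun p : R * R => snd p)); [apply continuous_fst|apply continuous_snd].
    - exact CA. }
  assert (CBp : continuous (fun p : R * R => Derive B (fst p - snd p)) (s, t)).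
  { apply (continuous_comp (fun p : R * R => fst p - snd p) (Derive B)).
    - apply (continuous_minus (fun p : R * R => fst p) (fun p : R * R => snd p)); [apply continuous_fst|apply continuous_snd].
    - exact CB. }
  split; [eexists; eauto|]. split; [eexists; eauto|]. split.
  - apply (continuous_ext_loc _ (fun p : R * R => Derive A (fst p + snd p) + Derive B (fst p - snd p))).
    + exists (mkposreal e He). intros [s' t'] [h1 h2]. simpl. symmetry. apply E. apply He'; auto.
    + apply cplus; auto.
  - apply (continuous_ext_loc _ (fun p : R * R => Derive A (fst p + snd p) - Derive B (fst p - snd p))).
    + exists (mkposreal e He). intros [s' t'] [h1 h2]. simpl. symmetry. apply E. apply He'; auto.
    + apply cminus; auto.
Qed.

Lemma half_comb (I : R -> Prop) (C Gm m dm : R -> R) (sg : R) :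
  (forall t, I t -> locally t I) ->
  (forall t, I t -> ex_derive C t /\ ex_derive (Derive C) t /\ ex_derive (Derive (Derive C)) t) ->
  (forall t, I t -> is_derive Gm t (m t)) -> (forall t, I t -> is_derive m t (dm t)) ->
  (forall t, I t -> continuous dm t) ->
  forall t, I t ->
    Derive (fun s => (C s + sg * Gm s) / 2) t = (Derive C t + sg * m t) / 2 /\
    Derive (Derive (fun s => (C s + sg * Gm s) / 2)) t = (Derive (Derive C) t + sg * dm t) / 2 /\
    ex_derive (fun s => (C s + sg * Gm s) / 2) t /\
    ex_derive (Derive (fun s => (C s + sg * Gm s) / 2)) t /\
    continuous (Derive (Derive (fun s => (C s + sg * Gm s) / 2))) t.
Proof.
  intros Hloc HC HG Hm Hdm.
  assert (D1 : forall t, I t -> is_derive (fun s => (C s + sg * Gm s) / 2) t ((Derive C t + sg * m t) / 2)).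
  { intros t Ht. destruct (HC t Ht) as [C1 _].
    auto_derive.
    - split; auto. split; auto. exists (m t); auto.
    - etafix. rewrite (is_derive_unique Gm t (m t) (HG t Ht)). match goal with |- ?x = ?y => change (@eq R x y) end. field. }
  assert (E1 : forall t, I t -> Derive (fun s => (C s + sg * Gm s) / 2) t = (Derive C t + sg * m t) / 2).
  { intros t Ht. apply is_derive_unique. auto. }
  assert (D2 : forall t, I t -> is_derive (Derive (fun s => (C s + sg * Gm s) / 2)) t
      ((Derive (Derive C) t + sg * dm t) / 2)).
  { intros t Ht. destruct (HC t Ht) as [_ [C2 _]].
    apply (is_derive_ext_loc (fun s => (Derive C s + sg * m s) / 2)).
    - generalize (Hloc t Ht). apply filter_imp. intros s Hs. symmetry. auto.
    - auto_derive.
      + split; auto. split; auto. exists (dm t); auto.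
      + etafix. rewrite (is_derive_unique m t (dm t) (Hm t Ht)).
        match goal with |- ?x = ?y => change (@eq R x y) end. field. }
  intros t Ht. split; [auto|]. split; [apply is_derive_unique; auto|].
  split; [exists ((Derive C t + sg * m t) / 2); auto|].
  split; [exists ((Derive (Derive C) t + sg * dm t) / 2); auto|].
  apply (continuous_ext_loc _ (fun s => (Derive (Derive C) s + sg * dm s) / 2)).
  - generalize (Hloc t Ht). apply filter_imp. intros s Hs. symmetry. apply is_derive_unique. auto.
  - destruct (HC t Ht) as [_ [_ C3]]. apply cdiv; [|apply cconst|lra].
    apply cplus; [apply (ex_derive_continuous (Derive (Derive C)) t); auto|].
    apply cmul; [apply cconst|auto].
Qed.

Ltac req := match goal with |- ?x = ?y => change (@eq R x y) end.

Lemma excont (f : R -> R) (t : R) : ex_derive f t -> continuous f t.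
Proof. intros H. apply (@ex_derive_continuous R_AbsRing R_NormedModule f t H). Qed.

Lemma null_alg (nx ny nz cx cy cz sg : R) : nx ^ 2 + ny ^ 2 - nz ^ 2 = 1 ->
  nx * cx + ny * cy - nz * cz = 0 -> sg ^ 2 = 1 ->
  ((cx + sg * (ny * cz - nz * cy)) / 2) ^ 2 + ((cy + sg * (nz * cx - nx * cz)) / 2) ^ 2
  - ((cz + sg * (- (nx * cy - ny * cx))) / 2) ^ 2 = 0.
Proof.
  intros N O S.
  replace (((cx + sg * (ny * cz - nz * cy)) / 2) ^ 2 + ((cy + sg * (nz * cx - nx * cz)) / 2) ^ 2
  - ((cz + sg * (- (nx * cy - ny * cx))) / 2) ^ 2) with
   (((cx^2 + cy^2 - cz^2) * (1 - sg^2 * (nx ^ 2 + ny ^ 2 - nz ^ 2)) + sg^2 * (nx * cx + ny * cy - nz * cz)^2) / 4) by (field).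
  rewrite N, O, S. field.
Qed.

Lemma det_alg (nx ny nz cx cy cz : R) : nx ^ 2 + ny ^ 2 - nz ^ 2 = 1 ->
  nx * cx + ny * cy - nz * cz = 0 -> cx ^ 2 + cy ^ 2 - cz ^ 2 <> 0 ->
  let mx := ny * cz - nz * cy in let my := nz * cx - nx * cz in let mz := - (nx * cy - ny * cx) in
  cy * mz - cz * my <> 0 \/ cx * mz - cz * mx <> 0.
Proof.
  intros N O C mx my mz.
  assert (L : (cy * mz - cz * my) ^ 2 + (cx * mz - cz * mx) ^ 2 =
     (cx ^ 2 + cy ^ 2 - cz ^ 2) * ((cx ^ 2 + cy ^ 2 - cz ^ 2) * (nx ^ 2 + ny ^ 2 - nz ^ 2) - (nx * cx + ny * cy - nz * cz) ^ 2)
     + (cx * my - cy * mx) ^ 2).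
  { unfold mx, my, mz. ring. }
  rewrite N, O in L.
  destruct (Req_dec (cy * mz - cz * my) 0) as [E1|E1]; [|left; auto].
  destruct (Req_dec (cx * mz - cz * mx) 0) as [E2|E2]; [|right; auto].
  exfalso. rewrite E1, E2 in L. apply C.
  set (R2 := cx * my - cy * mx) in L. set (CC := cx ^ 2 + cy ^ 2 - cz ^ 2) in *.
  assert (0 <= R2 ^ 2) by apply pow2_ge_0.
  assert (CC ^ 2 = 0) by nra.
  simpl in H0. rewrite Rmult_1_r in H0. apply Rmult_integral in H0. destruct H0; auto.
Qed.

Section Main.
Variables (a b : Rbar) (c n : R -> V3) (ts : R).
Hypothesis Hts : in_interval a b ts.
Hypothesis hc_an : analytic_curve (in_interval a b) c.
Hypothesis hn_an : analytic_curve (in_interval a b) n.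
Hypothesis hc_type : (forall t, in_interval a b t -> 0 < lprod (dcurve c t) (dcurve c t)) \/
             (forall t, in_interval a b t -> lprod (dcurve c t) (dcurve c t) < 0).
Hypothesis hn_unit : forall t, in_interval a b t -> lprod (n t) (n t) = 1.
Hypothesis hn_orth : forall t, in_interval a b t -> lprod (n t) (dcurve c t) = 0.

Let I := in_interval a b.
Let cx t := vx (c t). Let cy t := vy (c t). Let cz t := vz (c t).
Let nx t := vx (n t). Let ny t := vy (n t). Let nz t := vz (n t).
Let dcx := Derive cx. Let dcy := Derive cy. Let dcz := Derive cz.
Let dnx := Derive nx. Let dny := Derive ny. Let dnz := Derive nz.
Let ddcx := Derive dcx. Let ddcy := Derive dcy. Let ddcz := Derive dcz.

Lemma Iloc t : I t -> locally t I.
Proof. intros H. apply (loc_I a b t I H). auto. Qed.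

Lemma sm_all t : I t ->
  (ex_derive cx t /\ ex_derive (Derive cx) t /\ ex_derive (Derive (Derive cx)) t) /\
  (ex_derive cy t /\ ex_derive (Derive cy) t /\ ex_derive (Derive (Derive cy)) t) /\
  (ex_derive cz t /\ ex_derive (Derive cz) t /\ ex_derive (Derive (Derive cz)) t) /\
  (ex_derive nx t /\ ex_derive (Derive nx) t /\ ex_derive (Derive (Derive nx)) t) /\
  (ex_derive ny t /\ ex_derive (Derive ny) t /\ ex_derive (Derive (Derive ny)) t) /\
  (ex_derive nz t /\ ex_derive (Derive nz) t /\ ex_derive (Derive (Derive nz)) t).
Proof.
  intros Ht. destruct hc_an as [H1 [H2 H3]]. destruct hn_an as [H4 [H5 H6]].
  pose proof (an_smooth _ _ (H1 t Ht)). pose proof (an_smooth _ _ (H2 t Ht)).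
  pose proof (an_smooth _ _ (H3 t Ht)). pose proof (an_smooth _ _ (H4 t Ht)).
  pose proof (an_smooth _ _ (H5 t Ht)). pose proof (an_smooth _ _ (H6 t Ht)).
  unfold cx, cy, cz, nx, ny, nz. tauto.
Qed.

Let mx t := ny t * dcz t - nz t * dcy t.
Let my t := nz t * dcx t - nx t * dcz t.
Let mz t := - (nx t * dcy t - ny t * dcx t).
Let dmx t := dny t * dcz t + ny t * ddcz t - (dnz t * dcy t + nz t * ddcy t).
Let dmy t := dnz t * dcx t + nz t * ddcx t - (dnx t * dcz t + nx t * ddcz t).
Let dmz t := - (dnx t * dcy t + nx t * ddcy t - (dny t * dcx t + ny t * ddcx t)).

Lemma m_deriv t : I t -> is_derive mx t (dmx t) /\ is_derive my t (dmy t) /\ is_derive mz t (dmz t).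
Proof.
  intros Ht. destruct (sm_all t Ht) as [[X1 [X2 X3]] [[Y1 [Y2 Y3]] [[Z1 [Z2 Z3]] [[U1 [U2 U3]] [[V1 [V2 V3]] [W1 [W2 W3]]]]]]].
  unfold mx, my, mz, dmx, dmy, dmz, ddcx, ddcy, ddcz, dcx, dcy, dcz, dnx, dny, dnz.
  split; [|split]; (auto_derive; [repeat split; auto | etafix; req; ring]).
Qed.

Lemma dm_cont t : I t -> continuous dmx t /\ continuous dmy t /\ continuous dmz t.
Proof.
  intros Ht. destruct (sm_all t Ht) as [[X1 [X2 X3]] [[Y1 [Y2 Y3]] [[Z1 [Z2 Z3]] [[U1 [U2 U3]] [[V1 [V2 V3]] [W1 [W2 W3]]]]]]].
  assert (Cc : forall f : R -> R, ex_derive f t -> continuous f t) by (intros f Hf; apply excont; auto).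
  unfold dmx, dmy, dmz, ddcx, ddcy, ddcz, dcx, dcy, dcz, dnx, dny, dnz.
  repeat split; repeat (match goal with
  | |- continuous (fun x : R => @?f x + @?g x) _ => apply (cplus f g)
  | |- continuous (fun x : R => @?f x - @?g x) _ => apply (cminus f g)
  | |- continuous (fun x : R => @?f x * @?g x) _ => apply (cmul f g)
  | |- continuous (fun x : R => - @?f x) _ => apply (copp f)
  | |- continuous _ _ => apply Cc; assumption
  end).
Qed.

Lemma m_cont t : I t -> continuous mx t /\ continuous my t /\ continuous mz t.
Proof.
  intros Ht. destruct (m_deriv t Ht) as [D1 [D2 D3]].
  repeat split; apply excont; eexists; eauto.
Qed.

Let Gx s := RInt mx ts s.
Let Gy s := RInt my ts s.
Let Gz s := RInt mz ts s.

Lemma G_deriv_gen (m : R -> R) : (forall t, I t -> continuous m t) ->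
  forall s, I s -> is_derive (fun s => RInt m ts s) s (m s).
Proof.
  intros Hm s Hs. apply (is_derive_RInt m (fun s => RInt m ts s) ts s).
  - apply (loc_I a b s _ Hs). intros b0 Hb0. apply (RInt_correct m ts b0).
    apply ex_RInt_continuous. intros z Hz. apply Hm. apply (I_seg a b ts b0 z); auto.
  - apply Hm; auto.
Qed.

Lemma G_deriv s : I s -> is_derive Gx s (mx s) /\ is_derive Gy s (my s) /\ is_derive Gz s (mz s).
Proof.
  intros Hs. split; [|split]; apply G_deriv_gen; auto; intros t Ht; apply (m_cont t Ht).
Qed.

Let alx s := (cx s + 1 * Gx s) / 2.
Let aly s := (cy s + 1 * Gy s) / 2.
Let alz s := (cz s + 1 * Gz s) / 2.
Let bex s := (cx s + (-1) * Gx s) / 2.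
Let bey s := (cy s + (-1) * Gy s) / 2.
Let bez s := (cz s + (-1) * Gz s) / 2.

Lemma hx sg t : I t ->
    Derive (fun s => (cx s + sg * Gx s) / 2) t = (dcx t + sg * mx t) / 2 /\
    Derive (Derive (fun s => (cx s + sg * Gx s) / 2)) t = (ddcx t + sg * dmx t) / 2 /\
    ex_derive (fun s => (cx s + sg * Gx s) / 2) t /\
    ex_derive (Derive (fun s => (cx s + sg * Gx s) / 2)) t /\
    continuous (Derive (Derive (fun s => (cx s + sg * Gx s) / 2))) t.
Proof.
  apply (half_comb I cx Gx mx dmx sg Iloc).
  - intros u Hu. apply (sm_all u Hu).
  - intros u Hu. apply (G_deriv u Hu).
  - intros u Hu. apply (m_deriv u Hu).
  - intros u Hu. apply (dm_cont u Hu).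
Qed.
Lemma hy sg t : I t ->
    Derive (fun s => (cy s + sg * Gy s) / 2) t = (dcy t + sg * my t) / 2 /\
    Derive (Derive (fun s => (cy s + sg * Gy s) / 2)) t = (ddcy t + sg * dmy t) / 2 /\
    ex_derive (fun s => (cy s + sg * Gy s) / 2) t /\
    ex_derive (Derive (fun s => (cy s + sg * Gy s) / 2)) t /\
    continuous (Derive (Derive (fun s => (cy s + sg * Gy s) / 2))) t.
Proof.
  apply (half_comb I cy Gy my dmy sg Iloc).
  - intros u Hu. apply (sm_all u Hu).
  - intros u Hu. apply (G_deriv u Hu).
  - intros u Hu. apply (m_deriv u Hu).
  - intros u Hu. apply (dm_cont u Hu).
Qed.
Lemma hz sg t : I t ->
    Derive (fun s => (cz s + sg * Gz s) / 2) t = (dcz t + sg * mz t) / 2 /\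
    Derive (Derive (fun s => (cz s + sg * Gz s) / 2)) t = (ddcz t + sg * dmz t) / 2 /\
    ex_derive (fun s => (cz s + sg * Gz s) / 2) t /\
    ex_derive (Derive (fun s => (cz s + sg * Gz s) / 2)) t /\
    continuous (Derive (Derive (fun s => (cz s + sg * Gz s) / 2))) t.
Proof.
  apply (half_comb I cz Gz mz dmz sg Iloc).
  - intros u Hu. apply (sm_all u Hu).
  - intros u Hu. apply (G_deriv u Hu).
  - intros u Hu. apply (m_deriv u Hu).
  - intros u Hu. apply (dm_cont u Hu).
Qed.

Lemma c2n_of (f : R -> R) t0 R0 : (forall u, Rabs (u - t0) < R0 -> I u) ->
  (forall t, I t -> ex_derive f t /\ ex_derive (Derive f) t /\ continuous (Derive (Derive f)) t) ->
  C2n f t0 R0.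
Proof. intros HI H u Hu. apply H. apply HI. auto. Qed.

Lemma c2_all t : I t ->
  (ex_derive alx t /\ ex_derive (Derive alx) t /\ continuous (Derive (Derive alx)) t) /\
  (ex_derive aly t /\ ex_derive (Derive aly) t /\ continuous (Derive (Derive aly)) t) /\
  (ex_derive alz t /\ ex_derive (Derive alz) t /\ continuous (Derive (Derive alz)) t) /\
  (ex_derive bex t /\ ex_derive (Derive bex) t /\ continuous (Derive (Derive bex)) t) /\
  (ex_derive bey t /\ ex_derive (Derive bey) t /\ continuous (Derive (Derive bey)) t) /\
  (ex_derive bez t /\ ex_derive (Derive bez) t /\ continuous (Derive (Derive bez)) t).
Proof.
  intros Ht.
  destruct (hx 1 t Ht) as [_ [_ [A1 [A2 A3]]]]. destruct (hy 1 t Ht) as [_ [_ [A4 [A5 A6]]]].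
  destruct (hz 1 t Ht) as [_ [_ [A7 [A8 A9]]]]. destruct (hx (-1) t Ht) as [_ [_ [B1 [B2 B3]]]].
  destruct (hy (-1) t Ht) as [_ [_ [B4 [B5 B6]]]]. destruct (hz (-1) t Ht) as [_ [_ [B7 [B8 B9]]]].
  unfold alx, aly, alz, bex, bey, bez. tauto.
Qed.

Lemma dvals t : I t ->
  Derive alx t = (dcx t + 1 * mx t) / 2 /\ Derive aly t = (dcy t + 1 * my t) / 2 /\
  Derive alz t = (dcz t + 1 * mz t) / 2 /\ Derive bex t = (dcx t + (-1) * mx t) / 2 /\
  Derive bey t = (dcy t + (-1) * my t) / 2 /\ Derive bez t = (dcz t + (-1) * mz t) / 2.
Proof.
  intros Ht.
  destruct (hx 1 t Ht) as [A1 _]. destruct (hy 1 t Ht) as [A2 _]. destruct (hz 1 t Ht) as [A3 _].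
  destruct (hx (-1) t Ht) as [B1 _]. destruct (hy (-1) t Ht) as [B2 _]. destruct (hz (-1) t Ht) as [B3 _].
  unfold alx, aly, alz, bex, bey, bez. tauto.
Qed.

Lemma NO t : I t -> nx t ^ 2 + ny t ^ 2 - nz t ^ 2 = 1 /\ nx t * dcx t + ny t * dcy t - nz t * dcz t = 0.
Proof.
  intros Ht. pose proof (hn_unit t Ht) as H1. pose proof (hn_orth t Ht) as H2.
  unfold lprod, dcurve, mk3 in H1, H2. unfold nx, ny, nz, dcx, dcy, dcz, cx, cy, cz. simpl in H1, H2. simpl.
  unfold vx, vy, vz in *. simpl in *. split; nra.
Qed.


Lemma nullAB u : I u ->
  (Derive alx u) ^ 2 + (Derive aly u) ^ 2 - (Derive alz u) ^ 2 = 0 /\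
  (Derive bex u) ^ 2 + (Derive bey u) ^ 2 - (Derive bez u) ^ 2 = 0.
Proof.
  intros Hu. destruct (dvals u Hu) as [E1 [E2 [E3 [E4 [E5 E6]]]]]. destruct (NO u Hu) as [N O].
  rewrite E1, E2, E3, E4, E5, E6. unfold mx, my, mz.
  split; apply null_alg; auto; ring.
Qed.


Let Xh u w := mk3 (alx u + bex w) (aly u + bey w) (alz u + bez w).
Definition Xs s t := Xh (s + t) (s - t).

Definition GoodC t0 rho := 0 < rho /\ (forall u, Rabs (u - t0) < rho -> I u) /\
  (((forall u w, Rabs (u - t0) < rho -> Rabs (w - t0) < rho ->
       Derive aly u * Derive bez w - Derive bey w * Derive alz u <> 0) /\
    exists D psi, BI_soliton D psi /\ forall u w, Rabs (u - t0) < rho -> Rabs (w - t0) < rho ->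
       on_graph_x D psi (Xh u w)) \/
   ((forall u w, Rabs (u - t0) < rho -> Rabs (w - t0) < rho ->
       Derive alx u * Derive bez w - Derive bex w * Derive alz u <> 0) /\
    exists D psi, BI_soliton D psi /\ forall u w, Rabs (u - t0) < rho -> Rabs (w - t0) < rho ->
       on_graph_y D psi (Xh u w))).

Lemma cprod_nz t : I t -> dcx t ^ 2 + dcy t ^ 2 - dcz t ^ 2 <> 0.
Proof.
  intros Ht. assert (E : lprod (dcurve c t) (dcurve c t) = dcx t ^ 2 + dcy t ^ 2 - dcz t ^ 2).
  { unfold lprod, dcurve, mk3, dcx, dcy, dcz, cx, cy, cz. unfold vx, vy, vz. simpl. ring. }
  rewrite <- E. destruct hc_type as [H|H]; specialize (H t Ht); lra.
Qed.

Lemma good_ex t0 : I t0 -> exists rho, GoodC t0 rho.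
Proof.
  intros Ht0. destruct (I_open a b t0 Ht0) as [R0 [HR0 HIR]].
  assert (HC : forall (f : R -> R), (forall t, I t -> ex_derive f t /\ ex_derive (Derive f) t /\ continuous (Derive (Derive f)) t) -> C2n f t0 R0).
  { intros f Hf. apply c2n_of; auto. }
  assert (CA : forall t, I t -> _) by (intros t Ht; exact (c2_all t Ht)).
  assert (Cx : C2n alx t0 R0) by (apply HC; intros t Ht; apply (c2_all t Ht)).
  assert (Cy : C2n aly t0 R0) by (apply HC; intros t Ht; apply (c2_all t Ht)).
  assert (Cz : C2n alz t0 R0) by (apply HC; intros t Ht; apply (c2_all t Ht)).
  assert (Dx : C2n bex t0 R0) by (apply HC; intros t Ht; apply (c2_all t Ht)).
  assert (Dy : C2n bey t0 R0) by (apply HC; intros t Ht; apply (c2_all t Ht)).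
  assert (Dz : C2n bez t0 R0) by (apply HC; intros t Ht; apply (c2_all t Ht)).
  destruct (NO t0 Ht0) as [N O].
  destruct (dvals t0 Ht0) as [E1 [E2 [E3 [E4 [E5 E6]]]]].
  destruct (det_alg (nx t0) (ny t0) (nz t0) (dcx t0) (dcy t0) (dcz t0) N O (cprod_nz t0 Ht0)) as [P|Q].
  - destruct (chart_main t0 R0 aly alz alx bey bez bex HR0 Cy Cz Cx Dy Dz Dx) as [r [Hr [Hdet [D [ps [HBI HG]]]]]].
    + intros u Hu. destruct (nullAB u (HIR u Hu)) as [N1 _]. lra.
    + intros u Hu. destruct (nullAB u (HIR u Hu)) as [_ N2]. lra.
    + rewrite E2, E3, E5, E6. unfold mx, my, mz in *. intro Z. apply P. lra.
    + exists (Rmin r R0). pose proof (Rmin_l r R0). pose proof (Rmin_r r R0).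
      split; [apply Rmin_pos; auto|]. split; [intros u Hu; apply HIR; lra|].
      left. split.
      * intros u w Hu Hw. apply Hdet; lra.
      * exists D, ps. split; auto. intros u w Hu Hw. destruct (HG u w ltac:(lra) ltac:(lra)) as [G1 G2].
        unfold on_graph_x, Xh, mk3, vx, vy, vz. simpl. split; auto.
  - destruct (chart_main t0 R0 alx alz aly bex bez bey HR0 Cx Cz Cy Dx Dz Dy) as [r [Hr [Hdet [D [ps [HBI HG]]]]]].
    + intros u Hu. destruct (nullAB u (HIR u Hu)) as [N1 _]. lra.
    + intros u Hu. destruct (nullAB u (HIR u Hu)) as [_ N2]. lra.
    + rewrite E1, E3, E4, E6. unfold mx, my, mz in *. intro Z. apply Q. lra.
    + exists (Rmin r R0). pose proof (Rmin_l r R0). pose proof (Rmin_r r R0).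
      split; [apply Rmin_pos; auto|]. split; [intros u Hu; apply HIR; lra|].
      right. split.
      * intros u w Hu Hw. apply Hdet; lra.
      * exists D, ps. split; auto. intros u w Hu Hw. destruct (HG u w ltac:(lra) ltac:(lra)) as [G1 G2].
        unfold on_graph_y, Xh, mk3, vx, vy, vz. simpl. split; auto.
Qed.

Definition OO s t := exists t0 rho, I t0 /\ GoodC t0 rho /\ Rabs (s - t0) < rho / 2 /\ Rabs t < rho / 2.

Lemma OO_open : open2 OO.
Proof.
  intros s t [t0 [rho [H0 [HG [H1 H2]]]]].
  exists (Rmin (rho / 2 - Rabs (s - t0)) (rho / 2 - Rabs t)). split; [apply Rmin_pos; lra|].
  intros s' t' h1 h2. pose proof (Rmin_l (rho / 2 - Rabs (s - t0)) (rho / 2 - Rabs t)).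
  pose proof (Rmin_r (rho / 2 - Rabs (s - t0)) (rho / 2 - Rabs t)).
  exists t0, rho. split; auto. split; auto. split.
  - replace (s' - t0) with ((s' - s) + (s - t0)) by ring. eapply Rle_lt_trans. apply Rabs_triang. lra.
  - replace t' with ((t' - t) + t) by ring. eapply Rle_lt_trans. apply Rabs_triang. lra.
Qed.

Lemma uw_bound s t t0 rho : Rabs (s - t0) < rho / 2 -> Rabs t < rho / 2 ->
  Rabs (s + t - t0) < rho /\ Rabs (s - t - t0) < rho.
Proof.
  intros h1 h2. split.
  - replace (s + t - t0) with ((s - t0) + t) by ring. eapply Rle_lt_trans. apply Rabs_triang. lra.
  - replace (s - t - t0) with ((s - t0) + - t) by ring. eapply Rle_lt_trans. apply Rabs_triang.
    rewrite Rabs_Ropp. lra.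
Qed.

Lemma OO_I s t : OO s t -> I (s + t) /\ I (s - t).
Proof.
  intros [t0 [rho [H0 [[Hr [HI _]] [H1 H2]]]]]. destruct (uw_bound s t t0 rho H1 H2). split; apply HI; auto.
Qed.

Lemma d1 (f : R -> R) : (forall t, I t -> ex_derive f t /\ ex_derive (Derive f) t /\ continuous (Derive (Derive f)) t) ->
  forall u, I u -> is_derive f u (Derive f u) /\ continuous (Derive f) u.
Proof.
  intros H u Hu. destruct (H u Hu) as [A [B _]]. split. apply Derive_correct; auto. apply excont; auto.
Qed.

Lemma C1x : C1_on OO (fun s t => alx (s + t) + bex (s - t)) /\
  (forall s t, OO s t -> pu (fun s t => alx (s + t) + bex (s - t)) s t = Derive alx (s + t) + Derive bex (s - t) /\
                       pv (fun s t => alx (s + t) + bex (s - t)) s t = Derive alx (s + t) - Derive bex (s - t)).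
Proof. apply (C1_comb I OO); [apply OO_I | apply OO_open | apply d1 | apply d1]; intros t Ht; apply (c2_all t Ht). Qed.
Lemma C1y : C1_on OO (fun s t => aly (s + t) + bey (s - t)) /\
  (forall s t, OO s t -> pu (fun s t => aly (s + t) + bey (s - t)) s t = Derive aly (s + t) + Derive bey (s - t) /\
                       pv (fun s t => aly (s + t) + bey (s - t)) s t = Derive aly (s + t) - Derive bey (s - t)).
Proof. apply (C1_comb I OO); [apply OO_I | apply OO_open | apply d1 | apply d1]; intros t Ht; apply (c2_all t Ht). Qed.
Lemma C1z : C1_on OO (fun s t => alz (s + t) + bez (s - t)) /\
  (forall s t, OO s t -> pu (fun s t => alz (s + t) + bez (s - t)) s t = Derive alz (s + t) + Derive bez (s - t) /\
                       pv (fun s t => alz (s + t) + bez (s - t)) s t = Derive alz (s + t) - Derive bez (s - t)).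
Proof. apply (C1_comb I OO); [apply OO_I | apply OO_open | apply d1 | apply d1]; intros t Ht; apply (c2_all t Ht). Qed.

Lemma XuXv s t : OO s t ->
  Xu Xs s t = mk3 (Derive alx (s + t) + Derive bex (s - t)) (Derive aly (s + t) + Derive bey (s - t))
                  (Derive alz (s + t) + Derive bez (s - t)) /\
  Xv Xs s t = mk3 (Derive alx (s + t) - Derive bex (s - t)) (Derive aly (s + t) - Derive bey (s - t))
                  (Derive alz (s + t) - Derive bez (s - t)).
Proof.
  intros H. destruct (proj2 C1x s t H) as [X1 X2]. destruct (proj2 C1y s t H) as [Y1 Y2].
  destruct (proj2 C1z s t H) as [Z1 Z2].
  unfold Xu, Xv. split.
  - change (pu (fun a b => alx (a + b) + bex (a - b)) s t) with (pu (fun a0 b0 => vx (Xs a0 b0)) s t) in X1.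
    change (pu (fun a b => aly (a + b) + bey (a - b)) s t) with (pu (fun a0 b0 => vy (Xs a0 b0)) s t) in Y1.
    change (pu (fun a b => alz (a + b) + bez (a - b)) s t) with (pu (fun a0 b0 => vz (Xs a0 b0)) s t) in Z1.
    rewrite X1, Y1, Z1. reflexivity.
  - change (pv (fun a b => alx (a + b) + bex (a - b)) s t) with (pv (fun a0 b0 => vx (Xs a0 b0)) s t) in X2.
    change (pv (fun a b => aly (a + b) + bey (a - b)) s t) with (pv (fun a0 b0 => vy (Xs a0 b0)) s t) in Y2.
    change (pv (fun a b => alz (a + b) + bez (a - b)) s t) with (pv (fun a0 b0 => vz (Xs a0 b0)) s t) in Z2.
    rewrite X2, Y2, Z2. reflexivity.
Qed.

Lemma main_result : exists (O : R -> R -> Prop) (X : R -> R -> V3),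
    (forall t, in_interval a b t -> O t 0) /\
    BI_general_surface O X /\
    (forall t, in_interval a b t -> X t 0 = c t /\ unit_normal_at X t 0 (n t)).
Proof.
  exists OO, Xs. split; [|split].
  - intros t Ht. destruct (good_ex t Ht) as [rho Hrho]. exists t, rho. split; auto. split; auto.
    destruct Hrho as [Hr _]. rewrite Rminus_eq_0, Rabs_R0. split; lra.
  - split.
    + split; [apply OO_open|]. split; [apply C1x|]. split; [apply C1y|]. split; [apply C1z|].
      intros s t H al be E1 E2 E3.
      destruct (XuXv s t H) as [EU EV]. rewrite EU, EV in E1, E2, E3.
      unfold mk3, vx, vy, vz in E1, E2, E3. simpl in E1, E2, E3.
      destruct H as [t0 [rho [H0 [[Hr [HI HG]] [H1 H2]]]]].
      destruct (uw_bound s t t0 rho H1 H2) as [U W].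
      destruct HG as [[Hdet _]|[Hdet _]].
      * specialize (Hdet _ _ U W).
        destruct (cramer_solve (Derive aly (s + t)) (Derive alz (s + t)) (Derive bey (s - t)) (Derive bez (s - t))
                   (al + be) (al - be) 0 0 Hdet) as [S1 S2]; [lra|lra|].
        unfold crx, cry in S1, S2. replace ((0 * Derive bez (s - t) - 0 * Derive bey (s - t)) /
          (Derive aly (s + t) * Derive bez (s - t) - Derive bey (s - t) * Derive alz (s + t))) with 0 in S1 by (field; auto).
        replace ((Derive aly (s + t) * 0 - Derive alz (s + t) * 0) /
          (Derive aly (s + t) * Derive bez (s - t) - Derive bey (s - t) * Derive alz (s + t))) with 0 in S2 by (field; auto).
        lra.
      * specialize (Hdet _ _ U W).
        destruct (cramer_solve (Derive alx (s + t)) (Derive alz (s + t)) (Derive bex (s - t)) (Derive bez (s - t))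
                   (al + be) (al - be) 0 0 Hdet) as [S1 S2]; [lra|lra|].
        unfold crx, cry in S1, S2. replace ((0 * Derive bez (s - t) - 0 * Derive bex (s - t)) /
          (Derive alx (s + t) * Derive bez (s - t) - Derive bex (s - t) * Derive alz (s + t))) with 0 in S1 by (field; auto).
        replace ((Derive alx (s + t) * 0 - Derive alz (s + t) * 0) /
          (Derive alx (s + t) * Derive bez (s - t) - Derive bex (s - t) * Derive alz (s + t))) with 0 in S2 by (field; auto).
        lra.
    + intros s t H. pose proof H as H'. destruct H as [t0 [rho [H0 [[Hr [HI HG]] [H1 H2]]]]].
      exists (Rmin (rho / 2 - Rabs (s - t0)) (rho / 2 - Rabs t)). split; [apply Rmin_pos; lra|].
      pose proof (Rmin_l (rho / 2 - Rabs (s - t0)) (rho / 2 - Rabs t)).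
      pose proof (Rmin_r (rho / 2 - Rabs (s - t0)) (rho / 2 - Rabs t)).
      assert (Hn : forall s' t', Rabs (s' - s) < Rmin (rho / 2 - Rabs (s - t0)) (rho / 2 - Rabs t) ->
          Rabs (t' - t) < Rmin (rho / 2 - Rabs (s - t0)) (rho / 2 - Rabs t) ->
          Rabs (s' + t' - t0) < rho /\ Rabs (s' - t' - t0) < rho).
      { intros s' t' h1 h2. apply uw_bound.
        - replace (s' - t0) with ((s' - s) + (s - t0)) by ring. eapply Rle_lt_trans. apply Rabs_triang. lra.
        - replace t' with ((t' - t) + t) by ring. eapply Rle_lt_trans. apply Rabs_triang. lra. }
      destruct HG as [[_ [D [ps [HBI HGr]]]]|[_ [D [ps [HBI HGr]]]]].
      * exists D, ps. split; auto. left. intros s' t' [_ [h1 h2]]. destruct (Hn s' t' h1 h2) as [U W].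
        apply HGr; auto.
      * exists D, ps. split; auto. right; left. intros s' t' [_ [h1 h2]]. destruct (Hn s' t' h1 h2) as [U W].
        apply HGr; auto.
  - intros t Ht.
    assert (HO : OO t 0).
    { destruct (good_ex t Ht) as [rho Hrho]. exists t, rho. split; auto. split; auto.
      destruct Hrho as [Hr _]. rewrite Rminus_eq_0, Rabs_R0. split; lra. }
    destruct (XuXv t 0 HO) as [EU EV]. rewrite Rplus_0_r, Rminus_0_r in EU, EV.
    destruct (dvals t Ht) as [E1 [E2 [E3 [E4 [E5 E6]]]]].
    rewrite E1, E2, E3, E4, E5, E6 in EU, EV.
    split; [|split; [|split]].
    + unfold Xs, Xh. rewrite Rplus_0_r, Rminus_0_r. unfold alx, aly, alz, bex, bey, bez, cx, cy, cz.
      unfold mk3, vx, vy, vz. destruct (c t) as [[p q] r]. simpl. f_equal; [f_equal|]; field.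
    + apply hn_unit; auto.
    + rewrite EU. pose proof (hn_orth t Ht) as HO2. unfold lprod, dcurve in *.
      unfold mk3, vx, vy, vz in *. simpl in *. unfold dcx, dcy, dcz, cx, cy, cz, vx, vy, vz in *. nra.
    + rewrite EV. unfold lprod, mx, my, mz, nx, ny, nz. unfold mk3, vx, vy, vz. simpl. field.
Qed.

End Main.




Theorem corollary2p1 (a b : Rbar) (hab : Rbar_lt a b)
  (c n : R -> V3)
  (hc_an : analytic_curve (in_interval a b) c)
  (hc_reg : forall t, in_interval a b t -> dcurve c t <> mk3 0 0 0)
  (hc_type : (forall t, in_interval a b t -> 0 < lprod (dcurve c t) (dcurve c t)) \/
             (forall t, in_interval a b t -> lprod (dcurve c t) (dcurve c t) < 0))
  (hn_an : analytic_curve (in_interval a b) n)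
  (hn_unit : forall t, in_interval a b t -> lprod (n t) (n t) = 1)
  (hn_orth : forall t, in_interval a b t -> lprod (n t) (dcurve c t) = 0) :
  exists (O : R -> R -> Prop) (X : R -> R -> V3),
    (forall t, in_interval a b t -> O t 0) /\
    BI_general_surface O X /\
    (forall t, in_interval a b t -> X t 0 = c t /\ unit_normal_at X t 0 (n t)).
Proof.
  destruct (I_ne a b hab) as [ts Hts].
  exact (main_result a b c n ts Hts hc_an hn_an hc_type hn_unit hn_orth).
Qed.
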